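(* Let $G_1,G_2$ be cubic graphs with $K'(G_1,3)=a$ and $K'(G_2,3)=b$. Then for any composition $G_1\,Y\,G_2$ and any composition $G_1\,H\,G_2$ (with any choices of distinguished vertices/edges and identifications), $K'(G_1\,Y\,G_2,3)=K'(G_1\,H\,G_2,3)=ab$.
   Context: Graphs are finite; multiple edges allowed, loops not. Compositions of cubic graphs $G_1,G_2$: (Y) choose a vertex $v_1\in G_1$ with incident edges $v_1s_{11},v_1s_{12},v_1s_{13}$ and a vertex $v_2\in G_2$ with incident edges $v_2s_{21},v_2s_{22},v_2s_{23}$ (in a chosen order); $G_1\,Y\,G_2$ is obtained from the disjoint union by deleting $v_1,v_2$ and adding the edges $s_{1j}s_{2j}$, $j=1,2,3$. (H) choose an edge $s_{11}s_{12}$ of $G_1$ and an edge $s_{21}s_{22}$ of $G_2$; $G_1\,H\,G_2$ is obtained from the disjoint union by deleting these two edges and adding the edges $s_{11}s_{21}$ and $s_{12}s_{22}$. A proper $3$-edge coloring assigns colors from $\{1,2,3\}$ to edges so that adjacent edges get different colors. An edge-Kempe chain (for colors $a\ne b$) is a connected component of the subgraph of edges colored $a$ or $b$; an edge-Kempe switch swaps $a,b$ on one chain. Colorings are edge-Kempe equivalent if related by a finite sequence of switches; $K'(G,3)$ is the number of equivalence classes of proper $3$-edge colorings of $G$. *)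

(* Defs.v *)
From mathcomp Require Import all_boot.
Set Implicit Arguments. Unset Strict Implicit. Unset Printing Implicit Defensive.

(* A finite multigraph: a finite vertex type, a finite edge type, and for each
   edge its (ordered pair of) endpoints.  Loops are excluded by [loopless]. *)
Record mgraph := MGraph {
  vert : finType;
  edge : finType;
  endpt : edge -> vert * vert }.

Section Basic.
Variable G : mgraph.

Definition inc (e : edge G) (v : vert G) : bool :=
  (v == (endpt e).1) || (v == (endpt e).2).

Definition loopless : bool := [forall e : edge G, (endpt e).1 != (endpt e).2].

Definition deg (v : vert G) : nat := #|[set e : edge G | inc e v]|.

Definition cubic : bool := loopless && [forall v : vert G, deg v == 3].

Definition other (e : edge G) (v : vert G) : vert G :=
  if (endpt e).1 == v then (endpt e).2 else (endpt e).1.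

Definition coloring := {ffun edge G -> 'I_3}.

Definition adjacent (e f : edge G) : bool :=
  (e != f) && [exists v : vert G, inc e v && inc f v].

Definition proper (c : coloring) : bool :=
  [forall e : edge G, forall f : edge G, adjacent e f ==> (c e != c f)].

(* two edges coloured a or b sharing an endpoint; the connected components of
   this relation (through [connect]) are the edge-Kempe chains *)
Definition chain_rel (c : coloring) (a b : 'I_3) : rel (edge G) :=
  fun e f => [&& c e \in [:: a; b], c f \in [:: a; b] &
                 [exists v : vert G, inc e v && inc f v]].

Definition swap (a b x : 'I_3) : 'I_3 :=
  if x == a then b else if x == b then a else x.

Definition kswitch (c : coloring) (a b : 'I_3) (e : edge G) : coloring :=
  [ffun f => if connect (chain_rel c a b) e f then swap a b (c f) else c f].

Definition kempe_step : rel coloring := fun c d =>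
  [exists a : 'I_3, exists b : 'I_3, exists e : edge G,
     [&& a != b, c e \in [:: a; b] & d == kswitch c a b e]].

Definition kempe_equiv (c d : coloring) : bool := connect kempe_step c d.

Definition Kprime : nat :=
  #|[set [set d | kempe_equiv c d] | c in [set c : coloring | proper c]]|.

Lemma not_inc_fst (e : edge G) (v : vert G) : ~~ inc e v -> (endpt e).1 != v.
Proof. by rewrite /inc negb_or eq_sym => /andP[]. Qed.

Lemma not_inc_snd (e : edge G) (v : vert G) : ~~ inc e v -> (endpt e).2 != v.
Proof. by rewrite /inc negb_or [v == _.2]eq_sym => /andP[]. Qed.

Lemma other_neq (e : edge G) (v : vert G) :
  inc e v -> (endpt e).1 != (endpt e).2 -> other e v != v.
Proof.
rewrite /inc /other; case: (endpt e) => x y /=.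
case/orP=> /eqP -> hxy; first by rewrite eqxx eq_sym.
by rewrite (negbTE hxy).
Qed.

End Basic.

(* Data for a Y-composition at a graph G: a vertex v and an ordering
   (injective enumeration) of three edges incident with v (all of them, when G
   is cubic); the side condition yf_noloop holds automatically in a loopless graph. *)
Record ydata (G : mgraph) := YData {
  yv : vert G;
  yf : 'I_3 -> edge G;
  yf_inj : injective yf;
  yf_inc : forall j, inc (yf j) yv;
  yf_noloop : forall j, (endpt (yf j)).1 != (endpt (yf j)).2 }.

Section YComp.
Variables (G1 G2 : mgraph) (d1 : ydata G1) (d2 : ydata G2).

Definition Yvert : finType :=
  ({x : vert G1 | x != yv d1} + {x : vert G2 | x != yv d2})%type.

Definition Yedge : finType :=
  ({e : edge G1 | ~~ inc e (yv d1)} + {e : edge G2 | ~~ inc e (yv d2)}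
    + 'I_3)%type.

Definition Yendpt (e : Yedge) : Yvert * Yvert :=
  match e with
  | inl (inl (exist e He)) =>
      (inl (exist _ (endpt e).1 (not_inc_fst He)),
       inl (exist _ (endpt e).2 (not_inc_snd He)))
  | inl (inr (exist e He)) =>
      (inr (exist _ (endpt e).1 (not_inc_fst He)),
       inr (exist _ (endpt e).2 (not_inc_snd He)))
  | inr j =>
      (inl (exist _ (other (yf d1 j) (yv d1))
                   (other_neq (yf_inc d1 j) (yf_noloop d1 j))),
       inr (exist _ (other (yf d2 j) (yv d2))
                   (other_neq (yf_inc d2 j) (yf_noloop d2 j))))
  end.

Definition Ycomp : mgraph := @MGraph Yvert Yedge Yendpt.
End YComp.

Section HComp.
Variables (G1 G2 : mgraph).
(* e1 = s11 s12 in G1, e2 = s21 s22 in G2; the booleans choose which endpoint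
   of the edge is s_{i1} (flip = false: s_{i1} = first stored endpoint). *)
Variables (e1 : edge G1) (flip1 : bool) (e2 : edge G2) (flip2 : bool).

Definition oends (G : mgraph) (e : edge G) (flip : bool) : vert G * vert G :=
  if flip then ((endpt e).2, (endpt e).1) else endpt e.

Definition Hvert : finType := (vert G1 + vert G2)%type.

Definition Hedge : finType :=
  ({e : edge G1 | e != e1} + {e : edge G2 | e != e2} + bool)%type.

Definition Hendpt (e : Hedge) : Hvert * Hvert :=
  match e with
  | inl (inl (exist e _)) => (inl (endpt e).1, inl (endpt e).2)
  | inl (inr (exist e _)) => (inr (endpt e).1, inr (endpt e).2)
  | inr false => (inl (oends e1 flip1).1, inr (oends e2 flip2).1)
  | inr true => (inl (oends e1 flip1).2, inr (oends e2 flip2).2)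
  end.

Definition Hcomp : mgraph := @MGraph Hvert Hedge Hendpt.
End HComp.

(* Main.v *)
Require Import Defs.
From mathcomp Require Import all_boot.
From mathcomp Require Import all_fingroup.
Set Implicit Arguments. Unset Strict Implicit. Unset Printing Implicit Defensive.

Section Gen.
Variable G : mgraph.
Implicit Types (c d : coloring G) (S : {set edge G}).

Definition ab (a b x : 'I_3) : bool := x \in [:: a; b].

Definition gswitch c (a b : 'I_3) S : coloring G :=
  [ffun f => if f \in S then swap a b (c f) else c f].

Definition closedb c (a b : 'I_3) S : bool :=
  [forall v : vert G, forall e : edge G, forall f : edge G,
     inc e v ==> inc f v ==> ab a b (c e) ==> ab a b (c f) ==> ((e \in S) == (f \in S))].

Lemma closedP c a b S :
  reflect (forall v e f, inc e v -> inc f v -> ab a b (c e) -> ab a b (c f) ->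
             (e \in S) = (f \in S)) (closedb c a b S).
Proof.
apply: (iffP forallP) => [H v e f he hf ae af | H v].
  by move/forallP: (H v) => /(_ e) /forallP /(_ f); rewrite he hf ae af => /eqP.
apply/forallP => e; apply/forallP => f.
by apply/implyP=> he; apply/implyP=> hf; apply/implyP=> ae; apply/implyP=> af; rewrite (H v e f).
Qed.

Definition gstep : rel (coloring G) := fun c d =>
  [exists a : 'I_3, exists b : 'I_3, exists S : {set edge G},
     [&& a != b, closedb c a b S & d == gswitch c a b S]].

Lemma gstepP c d : reflect (exists a b S, [/\ a != b, closedb c a b S & d = gswitch c a b S]) (gstep c d).
Proof.
apply: (iffP existsP) => [[a /existsP [b /existsP [S /and3P [h1 h2 /eqP h3]]]] | [a [b [S [h1 h2 h3]]]]].
  by exists a, b, S.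
by exists a; apply/existsP; exists b; apply/existsP; exists S; rewrite h1 h2 h3 eqxx.
Qed.

Lemma swap_ab a b x : ab a b (swap a b x) = ab a b x.
Proof. by move: a b x; do 3!case=> [[|[|[|?]]] //] ?. Qed.

Lemma swapK' a b x : swap a b (swap a b x) = x.
Proof. by apply/eqP; move: a b x => [[|[|[|?]]] ?] // [[|[|[|?]]] ?] // [[|[|[|?]]] ?]. Qed.

Lemma swapK a b : involutive (swap a b).
Proof. exact: swapK'. Qed.

Lemma swap_nab a b x : ~~ ab a b x -> swap a b x = x.
Proof. by rewrite /ab /swap !inE negb_or => /andP[/negbTE-> /negbTE->]. Qed.

Lemma swap_inj a b : injective (swap a b).
Proof. exact: can_inj (swapK a b). Qed.

Lemma gswitch_ab c a b S f : ab a b (gswitch c a b S f) = ab a b (c f).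
Proof. by rewrite ffunE; case: ifP => // _; rewrite swap_ab. Qed.

Lemma closed_gswitch c a b S T : closedb c a b T -> closedb (gswitch c a b S) a b T.
Proof.
move/closedP=> H; apply/closedP=> v e f he hf; rewrite !gswitch_ab; exact: (H v e f he hf).
Qed.

Lemma gswitchK c a b S : gswitch (gswitch c a b S) a b S = c.
Proof. by apply/ffunP=> f; rewrite !ffunE; case: (f \in S) => //; rewrite swapK'. Qed.

Lemma gstep_sym c d : gstep c d -> gstep d c.
Proof.
case/gstepP=> a [b [S [ab' cl ->]]]; apply/gstepP; exists a, b, S.
by rewrite gswitchK ab' closed_gswitch.
Qed.

Definition kset c a b e : {set edge G} := [set f | connect (chain_rel c a b) e f].

Lemma chain_rel_sym c a b : symmetric (chain_rel c a b).
Proof.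
move=> x y; rewrite /chain_rel; apply/and3P/and3P => [[h1 h2 /existsP[v /andP[h3 h4]]]|[h1 h2 /existsP[v /andP[h3 h4]]]];
 by split=> //; apply/existsP; exists v; rewrite h3 h4.
Qed.

Lemma kset_closed c a b e : closedb c a b (kset c a b e).
Proof.
apply/closedP => v x y hx hy ax ay; rewrite !inE.
have cr : chain_rel c a b x y by apply/and3P; split; [exact: ax | exact: ay | apply/existsP; exists v; rewrite hx hy].
apply/idP/idP => h.
  exact: connect_trans h (connect1 cr).
by apply: connect_trans h (connect1 _); rewrite chain_rel_sym.
Qed.

Lemma kstep_gstep : subrel (@kempe_step G) gstep.
Proof.
move=> c d /existsP[a /existsP[b /existsP[e /and3P[h1 h2 /eqP->]]]].
apply/gstepP; exists a, b, (kset c a b e); split=> //; first exact: kset_closed.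
by apply/ffunP=> f; rewrite !ffunE inE.
Qed.

Lemma gswitch_nab c a b S : (forall f, f \in S -> ~~ ab a b (c f)) -> gswitch c a b S = c.
Proof.
move=> H; apply/ffunP => f; rewrite ffunE; case: ifP => // /H; exact: swap_nab.
Qed.

Lemma gstep_kempe : subrel gstep (@kempe_equiv G).
Proof.
move=> c d /gstepP[a [b [S [ab' cl ->]]]].
have [n] := ubnP #|[set f in S | ab a b (c f)]|.
elim: n c S cl => // n IH c S cl /ltnSE Hn.
case: (pickP [pred f | (f \in S) && ab a b (c f)]) => [e /andP[eS ae] | none]; last first.
  rewrite gswitch_nab; first exact: connect0. move=> f fS; apply/negP=> af.
  by move: (none f); rewrite /= fS af.
set K := kset c a b e.
have clS : closed (chain_rel c a b) S.
  move=> x y /and3P[ax ay /existsP[v /andP[hx hy]]].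
  by move/closedP: cl => /(_ v x y hx hy ax ay).
have KS : forall f, f \in K -> f \in S.
  by move=> f; rewrite inE => hf; rewrite -(closed_connect clS hf).
set c1 := gswitch c a b K.
have st : kempe_step c c1.
  apply/existsP; exists a; apply/existsP; exists b; apply/existsP; exists e.
  apply/and3P; split => //; apply/eqP/ffunP => f; by rewrite !ffunE inE.
have -> : gswitch c a b S = gswitch c1 a b (S :\: K).
  apply/ffunP => f; rewrite !ffunE !inE.
  case fK: (connect (chain_rel c a b) e f) => /=; last by [].
  by have := KS f; rewrite inE fK => /(_ isT) ->.
apply: connect_trans (connect1 st) _.
apply: IH.
- apply/closedP => v x y hx hy; rewrite !gswitch_ab => ax ay.
  move/closedP: cl => /(_ v x y hx hy ax ay) h1.
  move/closedP: (kset_closed c a b e) => /(_ v x y hx hy ax ay) h2.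
  by rewrite !in_setD h1 h2.
- apply: leq_trans Hn; apply: proper_card; apply/properP; split.
    by apply/subsetP => f; rewrite !inE gswitch_ab => /andP[/andP[_ ->] ->].
  exists e; first by rewrite inE eS ae.
  by rewrite !inE connect0.
Qed.

Lemma kempe_gstep c d : kempe_equiv c d = connect gstep c d.
Proof.
apply/idP/idP.
  by apply: connect_sub => x y /kstep_gstep/connect1.
by apply: connect_sub => x y /gstep_kempe.
Qed.

Lemma kempe_refl c : kempe_equiv c c.
Proof. exact: connect0. Qed.

Lemma kempe_trans : transitive (@kempe_equiv G).
Proof. exact: connect_trans. Qed.

Lemma kempe_sym c d : kempe_equiv c d = kempe_equiv d c.
Proof.
have H : forall x y : coloring G, kempe_equiv x y -> kempe_equiv y x.
  move=> x y; rewrite !kempe_gstep => /connectP[p].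
  elim: p x => [|z p IHp] x /=; first by move=> _ ->; exact: connect0.
  case/andP=> hxz hp hy; apply: connect_trans (IHp z hp hy) _.
  by apply: connect1; apply: gstep_sym.
by apply/idP/idP; apply: H.
Qed.

End Gen.

Lemma card_sum (T : finType) (A : {set T}) (P : pred T) :
  #|[set x in A | P x]| = \sum_(x in A) P x.
Proof.
rewrite -sum1dep_card big_mkcondr /=; apply: eq_bigr => x _; by case: (P x).
Qed.

Lemma odd_sum (I : Type) (r : seq I) (P : pred I) (F : I -> nat) :
  odd (\sum_(i <- r | P i) F i) = odd (\sum_(i <- r | P i) odd (F i)).
Proof.
apply: (big_ind2 (fun x y => odd x = odd y)) => //.
  by move=> x1 x2 y1 y2 h1 h2; rewrite !oddD h1 h2.
by move=> i _; case: (odd (F i)).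
Qed.

Lemma sum_eq1 (T : finType) (A : {set T}) (x : T) : \sum_(u in A) (u == x) = (x \in A).
Proof.
case xA: (x \in A).
  rewrite (bigD1 x) //= eqxx big1 // => u /andP[_ /negbTE ->]; done.
by rewrite big1 // => u uA; case: eqP => // ux; rewrite -ux uA in xA.
Qed.

Lemma parity (G : mgraph) (A : {set vert G}) (T : {set edge G}) :
  (forall e : edge G, (endpt e).1 != (endpt e).2) ->
  odd (\sum_(u in A) #|[set e in T | inc e u]|) =
  odd #|[set e in T | ((endpt e).1 \in A) != ((endpt e).2 \in A)]|.
Proof.
move=> loopl.
rewrite (eq_bigr (fun u => \sum_(e in T) inc e u)); last by move=> u _; rewrite card_sum.
rewrite exchange_big /= card_sum.
rewrite (eq_bigr (fun e => ((endpt e).1 \in A) + ((endpt e).2 \in A))); last first.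
  move=> e _; rewrite /inc.
  rewrite (eq_bigr (fun u => (u == (endpt e).1) + (u == (endpt e).2))); last first.
    move=> u _; case: eqP => [->|] //=.
    by rewrite (negbTE (loopl e)).
  by rewrite big_split /= !sum_eq1.
rewrite odd_sum [in RHS]odd_sum; congr odd; apply: eq_bigr => e _.
by case: ((endpt e).1 \in A); case: ((endpt e).2 \in A).
Qed.

Lemma odd_sum_const (T : finType) (A : {set T}) (f : T -> nat) (p : bool) :
  (forall u, u \in A -> odd (f u) = p) -> odd (\sum_(u in A) f u) = p && odd #|A|.
Proof.
move=> H; rewrite odd_sum (eq_bigr (fun _ => nat_of_bool p)); last by move=> u /H ->.
rewrite sum_nat_const oddM andbC; by case: p H.
Qed.

Lemma connect_ind_r (T : finType) (e : rel T) (P : T -> Prop) x :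
  P x -> (forall y z, connect e x y -> P y -> e y z -> P z) ->
  forall y, connect e x y -> P y.
Proof.
move=> Px H y /connectP[p hp ->] {y}.
have : forall y, connect e x y -> P y -> path e y p -> P (last y p).
  elim: p {hp} => //= z p IH y cxy Py /andP[eyz hp].
  apply: IH hp; first exact: connect_trans cxy (connect1 eyz).
  exact: H eyz.
by apply => //; exact: connect0.
Qed.

Section Gen3.
Variable G : mgraph.
Implicit Types (c d : coloring G) (S : {set edge G}) (e f : edge G) (v : vert G) (a b : 'I_3).

Lemma propP c : reflect (forall e f, adjacent e f -> c e != c f) (Defs.proper c).
Proof.
apply: (iffP forallP) => [H e f ef | H e].
  by move/forallP: (H e) => /(_ f) /implyP; apply.
by apply/forallP => f; apply/implyP; apply: H.
Qed.

Lemma adjP e f : reflect (e != f /\ exists v, inc e v /\ inc f v) (adjacent e f).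
Proof.
apply: (iffP andP) => [[h /existsP[v /andP[h1 h2]]]|[h [v [h1 h2]]]]; split => //.
  by exists v.
by apply/existsP; exists v; rewrite h1 h2.
Qed.

Lemma proper_at c v e f : Defs.proper c -> inc e v -> inc f v -> c e = c f -> e = f.
Proof.
move/propP=> H he hf ce; apply/eqP; apply: contraT => ef.
have : adjacent e f by apply/adjP; split => //; exists v.
by move/H; rewrite ce eqxx.
Qed.

Lemma proper_gswitch c a b S : Defs.proper c -> closedb c a b S -> Defs.proper (gswitch c a b S).
Proof.
move=> /propP pc /closedP cl; apply/propP => e f /[dup] ef /adjP[_ [v [he hf]]].
rewrite !ffunE.
have Hef := pc e f ef.
case eS: (e \in S); case fS: (f \in S) => //.
- by apply: contra Hef => /eqP/swap_inj ->.
- case ae: (ab a b (c e)); last by rewrite swap_nab ?ae.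
  case af: (ab a b (c f)); first by move: (cl v e f he hf ae af); rewrite eS fS.
  by apply/eqP => h; move: af; rewrite -h swap_ab ae.
- case af: (ab a b (c f)); last by rewrite swap_nab ?af.
  case ae: (ab a b (c e)); first by move: (cl v e f he hf ae af); rewrite eS fS.
  by apply/eqP => h; move: ae; rewrite h swap_ab af.
Qed.

Lemma gstep_proper c d : Defs.proper c -> gstep c d -> Defs.proper d.
Proof. by move=> pc /gstepP[a [b [S [_ cl ->]]]]; apply: proper_gswitch. Qed.

Lemma kempe_proper c d : Defs.proper c -> kempe_equiv c d -> Defs.proper d.
Proof.
move=> pc; rewrite kempe_gstep; apply: (connect_ind_r (P := fun d => Defs.proper d)) => //.
by move=> y z _ py; apply: gstep_proper.
Qed.

Lemma kempe_ind (P : coloring G -> Prop) c :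
  P c -> (forall y z, kempe_equiv c y -> P y -> gstep y z -> P z) ->
  forall d, kempe_equiv c d -> P d.
Proof.
move=> Pc H d; rewrite kempe_gstep; apply: connect_ind_r => // y z cy.
by apply: H; rewrite kempe_gstep.
Qed.

Definition cmap (pi : 'I_3 -> 'I_3) c : coloring G := [ffun f => pi (c f)].

Lemma kempe_swap c a b : kempe_equiv c (cmap (swap a b) c).
Proof.
case: (eqVneq a b) => [<-|ab'].
  have -> : cmap (swap a a) c = c.
    by apply/ffunP => f; rewrite ffunE /swap; case: eqP => // ->.
  exact: kempe_refl.
apply: gstep_kempe; apply/gstepP; exists a, b, setT; split => //.
  by apply/closedP => v e f; rewrite !inE.
by apply/ffunP => f; rewrite !ffunE inE.
Qed.

Lemma tperm_swap (x y z : 'I_3) : tperm x y z = swap x y z.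
Proof.
rewrite /swap; case: tpermP => [->|->|h1 h2]; first by rewrite eqxx.
  by case: eqP => [->|]; rewrite ?eqxx.
by do 2!(case: eqP => //).
Qed.

Lemma kempe_perm c (pi : {perm 'I_3}) : kempe_equiv c (cmap pi c).
Proof.
case: (prod_tpermP pi) => ts -> _.
elim: ts c => [|t ts IH] c.
  have -> : cmap (\prod_(t <- [::]) tperm t.1 t.2)%g c = c.
    by apply/ffunP => f; rewrite ffunE big_nil perm1.
  exact: kempe_refl.
have -> : cmap (\prod_(t0 <- t :: ts) tperm t0.1 t0.2)%g c =
          cmap (\prod_(t0 <- ts) tperm t0.1 t0.2)%g (cmap (swap t.1 t.2) c).
  by apply/ffunP => f; rewrite !ffunE big_cons permM tperm_swap.
exact: kempe_trans (kempe_swap c t.1 t.2) (IH _).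
Qed.

Lemma closed_compl c a b S : closedb c a b S -> closedb c a b (~: S).
Proof.
move/closedP => H; apply/closedP => v e f he hf ae af; by rewrite !inE (H v e f).
Qed.

Lemma gswitch_compl c a b S : gswitch c a b (~: S) = cmap (swap a b) (gswitch c a b S).
Proof.
apply/ffunP => f; rewrite !ffunE inE.
by case: (f \in S) => //=; rewrite swapK'.
Qed.

Lemma color_exists c v : deg v = 3 -> Defs.proper c -> forall a, exists2 e, inc e v & c e = a.
Proof.
move=> dv pc a.
set St := [set e | inc e v].
have inj : {in St &, injective c}.
  by move=> e f; rewrite !inE => he hf; apply: proper_at pc he hf.
have : c @: St = setT.
  apply/eqP; rewrite eqEcard subsetT card_in_imset // cardsT card_ord.
  by rewrite /deg in dv; rewrite dv.
move/setP => /(_ a); rewrite inE => /imsetP[e]; rewrite inE => he ->.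
by exists e.
Qed.

Lemma color_count c v a : deg v = 3 -> Defs.proper c -> #|[set e | inc e v & c e == a]| = 1.
Proof.
move=> dv pc; have [e he ce] := color_exists dv pc a.
apply/eqP/cards1P; exists e; apply/setP => f; rewrite !inE.
apply/andP/eqP => [[hf /eqP cf]|->]; last by rewrite he ce eqxx.
by apply: proper_at pc hf he _; rewrite cf ce.
Qed.

Lemma closed_count c v a b S : deg v = 3 -> Defs.proper c -> a != b -> closedb c a b S ->
  ~~ odd #|[set e | inc e v & ab a b (c e) && (e \in S)]|.
Proof.
move=> dv pc ab' /closedP cl.
have [ea hea cea] := color_exists dv pc a.
have [eb heb ceb] := color_exists dv pc b.
have aea : ab a b (c ea) by rewrite cea /ab !inE eqxx.
have aeb : ab a b (c eb) by rewrite ceb /ab !inE eqxx orbT.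
have eaeb : ea != eb by apply/eqP => h; move: ab'; rewrite -cea -ceb h eqxx.
have hS := cl v ea eb hea heb aea aeb.
have -> : [set e | inc e v & ab a b (c e) && (e \in S)] =
          if ea \in S then [set ea; eb] else set0.
  apply/setP => f; rewrite !inE.
  apply/andP/idP => [[hf /andP[af fS]]|].
    move: af; rewrite /ab !inE => /orP[/eqP cf|/eqP cf].
      have e1 : f = ea by apply: proper_at pc hf hea _; rewrite cf cea.
      by subst f; rewrite fS !inE eqxx.
    have e1 : f = eb by apply: proper_at pc hf heb _; rewrite cf ceb.
    by subst f; rewrite hS fS !inE eqxx orbT.
  case eaS: (ea \in S); last by rewrite inE.
  rewrite !inE => /orP[/eqP->|/eqP->]; first by rewrite hea aea eaS.
  by rewrite heb aeb -hS eaS.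
by case: (ea \in S); rewrite ?cards0 // cards2 eaeb.
Qed.

End Gen3.

Lemma card_imset_same (T U V : finType) (D : {set T}) (g : T -> U) (h : T -> V) :
  {in D &, forall x y, (g x == g y) = (h x == h y)} -> #|g @: D| = #|h @: D|.
Proof.
move=> H.
pose k (Y : U) : option V := if [pick x in D | g x == Y] is Some x then Some (h x) else None.
have kg : forall x, x \in D -> k (g x) = Some (h x).
  move=> x xD; rewrite /k; case: pickP => [y /andP[yD /eqP gy]|/(_ x)]; last by rewrite xD eqxx.
  by congr Some; apply/eqP; rewrite -H // gy.
have -> : #|h @: D| = #|(Some \o h) @: D| by rewrite (imset_comp Some h) (card_imset _ (@Some_inj _)).
have -> : (Some \o h) @: D = k @: (g @: D).
  rewrite -imset_comp; apply: eq_in_imset => x xD /=; by rewrite kg.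
apply/esym; apply: card_in_imset => Y Z /imsetP[x xD ->] /imsetP[y yD ->].
by rewrite !kg // => -[] /eqP; rewrite -H // => /eqP.
Qed.

Section Classes.
Variable T : finType.
Variable R : rel T.
Hypothesis Rrefl : reflexive R.
Hypothesis Rsym : symmetric R.
Hypothesis Rtrans : transitive R.

Definition cls x : {set T} := [set y | R x y].

Lemma cls_eq x y : (cls x == cls y) = R x y.
Proof.
apply/eqP/idP => [h | rxy].
  have : y \in cls y by rewrite inE Rrefl.
  by rewrite -h inE.
apply/setP => z; rewrite !inE; apply/idP/idP => h.
  by apply: Rtrans h; rewrite Rsym.
exact: Rtrans h.
Qed.

End Classes.

Lemma card_classes_map (T U : finType) (PT : {set T}) (PU : {set U}) (RT : rel T) (RU : rel U) (f : T -> U) :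
  reflexive RT -> symmetric RT -> transitive RT ->
  reflexive RU -> symmetric RU -> transitive RU ->
  (forall x y, x \in PT -> y \in PT -> RT x y = RU (f x) (f y)) ->
  (forall x, x \in PT -> f x \in PU) ->
  (forall u, u \in PU -> exists2 x, x \in PT & RU (f x) u) ->
  #|[set cls RT x | x in PT]| = #|[set cls RU u | u in PU]|.
Proof.
move=> r1 s1 t1 r2 s2 t2 Hf fP fS.
have -> : [set cls RU u | u in PU] = [set cls RU (f x) | x in PT].
  apply/setP => Y; apply/imsetP/imsetP => [[u uP ->]|[x xP ->]].
    have [x xP hx] := fS u uP; exists x => //; by apply/eqP; rewrite cls_eq // s2.
  by exists (f x); [exact: fP xP | done].
apply: card_imset_same => x y xP yP.
by rewrite !cls_eq // Hf.
Qed.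

Lemma setX_inj (T1 T2 : finType) (A A' : {set T1}) (B B' : {set T2}) :
  A != set0 -> B != set0 -> A' != set0 -> B' != set0 -> setX A B = setX A' B' -> A = A' /\ B = B'.
Proof.
move=> /set0Pn[a aA] /set0Pn[b bB] /set0Pn[a' aA'] /set0Pn[b' bB'] /setP H.
split; apply/setP => x; apply/idP/idP => h.
- by move: (H (x, b)); rewrite !inE /= h bB => /esym/andP[].
- by move: (H (x, b')); rewrite !inE /= h bB' => /andP[].
- by move: (H (a, x)); rewrite !inE /= h aA => /esym/andP[].
- by move: (H (a', x)); rewrite !inE /= h aA' => /andP[].
Qed.

Lemma card_classes_prod (T1 T2 : finType) (P1 : {set T1}) (P2 : {set T2}) (R1 : rel T1) (R2 : rel T2) :
  reflexive R1 -> reflexive R2 ->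
  #|[set cls [rel u v | R1 u.1 v.1 && R2 u.2 v.2] u | u in setX P1 P2]| =
  #|[set cls R1 x | x in P1]| * #|[set cls R2 x | x in P2]|.
Proof.
move=> r1 r2.
set C1 := [set cls R1 x | x in P1]; set C2 := [set cls R2 x | x in P2].
have -> : [set cls [rel u v | R1 u.1 v.1 && R2 u.2 v.2] u | u in setX P1 P2] =
          (fun YZ : {set T1} * {set T2} => setX YZ.1 YZ.2) @: setX C1 C2.
  apply/setP => W; apply/imsetP/imsetP => [[[p q] pq ->]|[[Y Z] YZ ->]].
    exists (cls R1 p, cls R2 q).
      by move: pq; rewrite !inE /= => /andP[hp hq]; apply/andP; split; apply/imsetP; [exists p|exists q].
    by apply/setP => -[x y]; rewrite !inE.
  move: YZ; rewrite !inE /= => /andP[/imsetP[p pP ->] /imsetP[q qP ->]].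
  exists (p, q); first by rewrite !inE pP qP.
  by apply/setP => -[x y]; rewrite !inE.
rewrite card_in_imset ?cardsX //.
move=> [Y Z] [Y' Z']; rewrite !inE /= => /andP[/imsetP[p _ ->] /imsetP[q _ ->]] /andP[/imsetP[p' _ ->] /imsetP[q' _ ->]] h.
have ne1 : forall x, cls R1 x != set0 by move=> x; apply/set0Pn; exists x; rewrite inE r1.
have ne2 : forall x, cls R2 x != set0 by move=> x; apply/set0Pn; exists x; rewrite inE r2.
by case: (setX_inj (ne1 p) (ne2 q) (ne1 p') (ne2 q') h) => -> ->.
Qed.

Section Glue.
Variables G G1 G2 : mgraph.
Variables (r1 : coloring G -> coloring G1) (r2 : coloring G -> coloring G2).
Hypothesis hprop : forall c, Defs.proper c -> Defs.proper (r1 c) /\ Defs.proper (r2 c).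
Hypothesis hfwd1 : forall c d, Defs.proper c -> gstep c d -> kempe_equiv (r1 c) (r1 d).
Hypothesis hfwd2 : forall c d, Defs.proper c -> gstep c d -> kempe_equiv (r2 c) (r2 d).
Hypothesis hlift1 : forall c d1, Defs.proper c -> gstep (r1 c) d1 ->
  exists c', [/\ kempe_equiv c c', r1 c' = d1 & exists pi : {perm 'I_3}, r2 c' = cmap pi (r2 c)].
Hypothesis hlift2 : forall c d2, Defs.proper c -> gstep (r2 c) d2 ->
  exists c', [/\ kempe_equiv c c', r2 c' = d2 & exists pi : {perm 'I_3}, r1 c' = cmap pi (r1 c)].
Hypothesis hfix : forall c c' (pi : {perm 'I_3}), Defs.proper c -> Defs.proper c' ->
  r2 c' = r2 c -> r1 c' = cmap pi (r1 c) -> kempe_equiv c c'.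
Hypothesis hsurj : forall p1 p2, Defs.proper p1 -> Defs.proper p2 ->
  exists c, [/\ Defs.proper c, kempe_equiv (r1 c) p1 & kempe_equiv (r2 c) p2].

Lemma cmap_comp (H : mgraph) (pi pi' : {perm 'I_3}) (c : coloring H) :
  cmap pi' (cmap pi c) = cmap (pi * pi')%g c.
Proof. by apply/ffunP => f; rewrite !ffunE permM. Qed.

Lemma cmap1 (H : mgraph) (c : coloring H) : cmap (1%g : {perm 'I_3}) c = c.
Proof. by apply/ffunP => f; rewrite !ffunE perm1. Qed.

Lemma glue_fwd c c' : Defs.proper c -> kempe_equiv c c' ->
  kempe_equiv (r1 c) (r1 c') /\ kempe_equiv (r2 c) (r2 c').
Proof.
move=> pc h.
suff : [/\ Defs.proper c', kempe_equiv (r1 c) (r1 c') & kempe_equiv (r2 c) (r2 c')] by case.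
move: c' h; apply: (kempe_ind (P := fun d => [/\ Defs.proper d, kempe_equiv (r1 c) (r1 d) & kempe_equiv (r2 c) (r2 d)])) => [|y z _ [py h1 h2] st].
  by split; rewrite ?kempe_refl.
split; first exact: gstep_proper st.
  exact: kempe_trans h1 (hfwd1 py st).
exact: kempe_trans h2 (hfwd2 py st).
Qed.

Lemma glue_lift1 c d1 : Defs.proper c -> kempe_equiv (r1 c) d1 ->
  exists c', [/\ kempe_equiv c c', r1 c' = d1 & exists pi : {perm 'I_3}, r2 c' = cmap pi (r2 c)].
Proof.
move=> pc; move: d1; apply: (kempe_ind (P := fun d => exists c', [/\ kempe_equiv c c', r1 c' = d & exists pi : {perm 'I_3}, r2 c' = cmap pi (r2 c)])) => [|y z _ [c' [cc' e1 [pi e2]]] st].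
  by exists c; split; rewrite ?kempe_refl //; exists 1%g; rewrite cmap1.
have pc' := kempe_proper pc cc'.
rewrite -e1 in st; have [c3 [cc3 e3 [pi3 e4]]] := hlift1 pc' st.
exists c3; split => //; first exact: kempe_trans cc' cc3.
by exists (pi * pi3)%g; rewrite e4 e2 cmap_comp.
Qed.

Lemma glue_lift2 c d2 : Defs.proper c -> kempe_equiv (r2 c) d2 ->
  exists c', [/\ kempe_equiv c c', r2 c' = d2 & exists pi : {perm 'I_3}, r1 c' = cmap pi (r1 c)].
Proof.
move=> pc; move: d2; apply: (kempe_ind (P := fun d => exists c', [/\ kempe_equiv c c', r2 c' = d & exists pi : {perm 'I_3}, r1 c' = cmap pi (r1 c)])) => [|y z _ [c' [cc' e1 [pi e2]]] st].
  by exists c; split; rewrite ?kempe_refl //; exists 1%g; rewrite cmap1.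
have pc' := kempe_proper pc cc'.
rewrite -e1 in st; have [c3 [cc3 e3 [pi3 e4]]] := hlift2 pc' st.
exists c3; split => //; first exact: kempe_trans cc' cc3.
by exists (pi * pi3)%g; rewrite e4 e2 cmap_comp.
Qed.

Lemma glue_equiv c c' : Defs.proper c -> Defs.proper c' ->
  kempe_equiv c c' = kempe_equiv (r1 c) (r1 c') && kempe_equiv (r2 c) (r2 c').
Proof.
move=> pc pc'; apply/idP/andP => [h|[h1 h2]].
  by have [] := glue_fwd pc h.
have [c2 [cc2 e1 [pi e2]]] := glue_lift1 pc h1.
have pc2 := kempe_proper pc cc2.
have h3 : kempe_equiv (r2 c2) (r2 c').
  rewrite e2; apply: kempe_trans h2; rewrite kempe_sym; exact: kempe_perm.
have [c3 [cc3 e3 [pi3 e4]]] := glue_lift2 pc2 h3.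
have pc3 := kempe_proper pc2 cc3.
have := hfix pc' pc3 e3; rewrite e4 e1 => /(_ pi3 erefl) h.
apply: kempe_trans cc2 _; apply: kempe_trans cc3 _; by rewrite kempe_sym.
Qed.

Theorem glue : Kprime G = Kprime G1 * Kprime G2.
Proof.
rewrite /Kprime.
have Hr : forall H : mgraph, [set [set d | kempe_equiv c d] | c in [set c : coloring H | Defs.proper c]] =
   [set cls (@kempe_equiv H) c | c in [set c : coloring H | Defs.proper c]] by [].
rewrite !Hr.
rewrite -(card_classes_prod _ _ (@kempe_refl G1) (@kempe_refl G2)).
apply: (card_classes_map (f := fun c => (r1 c, r2 c))).
- exact: kempe_refl.
- exact: kempe_sym.
- exact: kempe_trans.
- by move=> u /=; rewrite !kempe_refl.
- by move=> u v /=; rewrite kempe_sym [kempe_equiv u.2 _]kempe_sym.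
- move=> u v w /= /andP[h1 h2] /andP[h3 h4].
  by rewrite (kempe_trans h1 h3) (kempe_trans h2 h4).
- by move=> x y; rewrite !inE => px py; rewrite glue_equiv.
- by move=> x; rewrite !inE => /hprop[-> ->].
move=> [p q]; rewrite !inE /= => /andP[hp hq].
have [c [pc h1 h2]] := hsurj hp hq.
by exists c; rewrite ?inE // h1 h2.
Qed.

End Glue.

Lemma brute_distinct3 (x0 x1 x2 : 'I_3) (p : bool) :
  (forall a : 'I_3, odd ((x0 == a) + (x1 == a) + (x2 == a)) = p) ->
  [&& x0 != x1, x0 != x2 & x1 != x2].
Proof.
move=> H; move: (H (@Ordinal 3 0 isT)) (H (@Ordinal 3 1 isT)) (H (@Ordinal 3 2 isT)); clear H.
by move: x0 x1 x2 => [[|[|[|?]]] ?] // [[|[|[|?]]] ?] // [[|[|[|?]]] ?] //; case: p.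
Qed.

Lemma brute_equal2 (x0 x1 : 'I_3) (p : bool) :
  (forall a : 'I_3, odd ((x0 == a) + (x1 == a)) = p) -> x0 = x1.
Proof.
move=> H; move: (H (@Ordinal 3 0 isT)) (H (@Ordinal 3 1 isT)) (H (@Ordinal 3 2 isT)); clear H.
move=> h0 h1 h2; apply/eqP; move: h0 h1 h2.
by move: x0 x1 => [[|[|[|?]]] ?] // [[|[|[|?]]] ?] //; case: p.
Qed.

Lemma brute_pair3 (x0 x1 x2 a b : 'I_3) (s0 s1 s2 : bool) :
  [&& x0 != x1, x0 != x2 & x1 != x2] -> a != b ->
  ~~ odd ((ab a b x0 && s0) + (ab a b x1 && s1) + (ab a b x2 && s2)) ->
  [&& (ab a b x0 ==> ab a b x1 ==> (s0 == s1)),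
      (ab a b x0 ==> ab a b x2 ==> (s0 == s2)) &
      (ab a b x1 ==> ab a b x2 ==> (s1 == s2))].
Proof.
by move: x0 x1 x2 a b => [[|[|[|?]]] ?] // [[|[|[|?]]] ?] // [[|[|[|?]]] ?] // [[|[|[|?]]] ?] // [[|[|[|?]]] ?] //;
  case: s0; case: s1; case: s2.
Qed.

Definition o0 : 'I_3 := @Ordinal 3 0 isT.
Definition o1 : 'I_3 := @Ordinal 3 1 isT.
Definition o2 : 'I_3 := @Ordinal 3 2 isT.

Lemma ord3_cases (j : 'I_3) : [\/ j = o0, j = o1 | j = o2].
Proof.
case: j => [[|[|[|?]]] p] //.
- by constructor 1; apply: val_inj.
- by constructor 2; apply: val_inj.
- by constructor 3; apply: val_inj.
Qed.

Lemma card3 (P : pred 'I_3) : #|[set j | P j]| = P o0 + P o1 + P o2.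
Proof.
rewrite -sum1dep_card big_mkcond /= (big_ord_recl 2) (big_ord_recl 1) (big_ord_recl 0) big_ord0.
have -> : lift ord0 (lift ord0 (ord0 : 'I_1)) = o2 :> 'I_3 by apply: val_inj.
have -> : lift ord0 (ord0 : 'I_2) = o1 :> 'I_3 by apply: val_inj.
have -> : (ord0 : 'I_3) = o0 by apply: val_inj.
by case: (P o0); case: (P o1); case: (P o2).
Qed.

Lemma inj3 (T : eqType) (f : 'I_3 -> T) :
  [&& f o0 != f o1, f o0 != f o2 & f o1 != f o2] -> injective f.
Proof.
case/and3P => h01 h02 h12 j k.
case: (ord3_cases j) => ->; case: (ord3_cases k) => -> /eqP h //;
  first [ by rewrite h in h01 | by rewrite h in h02 | by rewrite h in h12
        | by rewrite eq_sym h in h01 | by rewrite eq_sym h in h02 | by rewrite eq_sym h in h12 ].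
Qed.

Lemma pairs3 (P s : 'I_3 -> bool) :
  [&& (P o0 ==> P o1 ==> (s o0 == s o1)), (P o0 ==> P o2 ==> (s o0 == s o2)) &
      (P o1 ==> P o2 ==> (s o1 == s o2))] ->
  forall j k, P j -> P k -> s j = s k.
Proof.
case/and3P => h01 h02 h12 j k.
case: (ord3_cases j) => ->; case: (ord3_cases k) => -> // pj pk.
- by move: h01; rewrite pj pk => /eqP.
- by move: h02; rewrite pj pk => /eqP.
- by move: h01; rewrite pj pk => /eqP.
- by move: h12; rewrite pj pk => /eqP.
- by move: h02; rewrite pj pk => /eqP.
- by move: h12; rewrite pj pk => /eqP.
Qed.

Section CubicFacts.
Variable G : mgraph.
Hypothesis cub : cubic G.

Lemma cub_loop (e : edge G) : (endpt e).1 != (endpt e).2.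
Proof. by case/andP: cub => /forallP /(_ e). Qed.

Lemma cub_deg (v : vert G) : deg v = 3.
Proof. by case/andP: cub => _ /forallP /(_ v) /eqP. Qed.

Lemma other_inc (e : edge G) (v u : vert G) : inc e v -> u != v -> inc e u = (u == other e v).
Proof.
move=> he uv; rewrite /other.
case: ((endpt e).1 =P v) => [h1|h1].
  by rewrite /inc h1 (negbTE uv).
have h2 : (endpt e).2 = v.
  by move: he; rewrite /inc => /orP[/eqP h|/eqP h] //; case: h1; rewrite h.
by rewrite /inc h2 (negbTE uv) orbF.
Qed.

Variable d : ydata G.

Definition yinv (e : edge G) : 'I_3 := odflt ord0 [pick j | yf d j == e].

Lemma yf_onto (e : edge G) : inc e (yv d) -> yf d (yinv e) = e.
Proof.
move=> he; rewrite /yinv; case: pickP => [j /eqP //|none].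
have : e \in [set yf d j | j in 'I_3].
  have -> : [set yf d j | j in 'I_3] = [set f | inc f (yv d)].
    apply/eqP; rewrite eqEcard; apply/andP; split.
      by apply/subsetP => f /imsetP[j _ ->]; rewrite inE yf_inc.
    rewrite card_imset; last exact: yf_inj.
    by rewrite card_ord -/(deg _) cub_deg.
  by rewrite inE.
by case/imsetP => j _ ej; move: (none j); rewrite ej eqxx.
Qed.

Lemma yinv_yf j : yinv (yf d j) = j.
Proof. apply: (@yf_inj _ d); apply: yf_onto; exact: yf_inc. Qed.

End CubicFacts.

Lemma eq_inl (A B : eqType) (a a' : A) : (inl a == inl a' :> A + B) = (a == a').
Proof. by []. Qed.
Lemma eq_inr (A B : eqType) (b b' : B) : (inr b == inr b' :> A + B) = (b == b').
Proof. by []. Qed.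
Lemma eq_inlr (A B : eqType) (a : A) (b : B) : (inl a == inr b :> A + B) = false.
Proof. by []. Qed.
Lemma eq_inrl (A B : eqType) (a : A) (b : B) : (inr b == inl a :> A + B) = false.
Proof. by []. Qed.
Lemma eq_sig (A : eqType) (P : pred A) (x y : {z | P z}) : (x == y) = (val x == val y).
Proof. by []. Qed.

Section Ycore.
Variables (G1 G2 : mgraph) (d1 : ydata G1) (d2 : ydata G2).
Hypotheses (cub1 : cubic G1) (cub2 : cubic G2).

Local Notation G := (Ycomp d1 d2).
Local Notation v1 := (yv d1).
Local Notation v2 := (yv d2).

Definition sig1 (e : edge G1) : edge G :=
  match (insub e : option {e : edge G1 | ~~ inc e v1}) with
  | Some s => inl (inl s) | None => inr (yinv d1 e) end.

Definition sig2 (e : edge G2) : edge G :=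
  match (insub e : option {e : edge G2 | ~~ inc e v2}) with
  | Some s => inl (inr s) | None => inr (yinv d2 e) end.

Lemma sig1_out e (h : ~~ inc e v1) : sig1 e = inl (inl (exist _ e h)).
Proof. by rewrite /sig1 (insubT (fun e => ~~ inc e v1) h). Qed.

Lemma sig2_out e (h : ~~ inc e v2) : sig2 e = inl (inr (exist _ e h)).
Proof. by rewrite /sig2 (insubT (fun e => ~~ inc e v2) h). Qed.

Lemma sig1_in e : inc e v1 -> sig1 e = inr (yinv d1 e).
Proof. by move=> h; rewrite /sig1 insubN // negbK. Qed.

Lemma sig2_in e : inc e v2 -> sig2 e = inr (yinv d2 e).
Proof. by move=> h; rewrite /sig2 insubN // negbK. Qed.

Lemma sig1_yf j : sig1 (yf d1 j) = inr j.
Proof. by rewrite sig1_in ?yf_inc // yinv_yf. Qed.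

Lemma sig2_yf j : sig2 (yf d2 j) = inr j.
Proof. by rewrite sig2_in ?yf_inc // yinv_yf. Qed.

Lemma sig1_val (s : {e : edge G1 | ~~ inc e v1}) : sig1 (val s) = inl (inl s).
Proof. by case: s => e h; rewrite sig1_out. Qed.

Lemma sig2_val (s : {e : edge G2 | ~~ inc e v2}) : sig2 (val s) = inl (inr s).
Proof. by case: s => e h; rewrite sig2_out. Qed.

Lemma sig1_inj : injective sig1.
Proof.
move=> e f; case: (boolP (inc e v1)) => he; case: (boolP (inc f v1)) => hf.
- rewrite !sig1_in // => -[] h; by rewrite -(yf_onto cub1 he) -(yf_onto cub1 hf) h.
- by rewrite sig1_in // sig1_out.
- by rewrite sig1_out // sig1_in.
- by rewrite !sig1_out // => -[].
Qed.

Lemma sig2_inj : injective sig2.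
Proof.
move=> e f; case: (boolP (inc e v2)) => he; case: (boolP (inc f v2)) => hf.
- rewrite !sig2_in // => -[] h; by rewrite -(yf_onto cub2 he) -(yf_onto cub2 hf) h.
- by rewrite sig2_in // sig2_out.
- by rewrite sig2_out // sig2_in.
- by rewrite !sig2_out // => -[].
Qed.

Lemma inc_sig1 e (t : {x : vert G1 | x != v1}) : inc (sig1 e) (inl t : vert G) = inc e (val t).
Proof.
case: (boolP (inc e v1)) => h.
  rewrite sig1_in // /inc /= eq_inl eq_inlr orbF eq_sig /= yf_onto //.
  by rewrite [RHS](other_inc h (valP t)).
by rewrite sig1_out /inc /= !eq_inl !eq_sig.
Qed.

Lemma inc_sig2 e (t : {x : vert G2 | x != v2}) : inc (sig2 e) (inr t : vert G) = inc e (val t).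
Proof.
case: (boolP (inc e v2)) => h.
  rewrite sig2_in // /inc /= ?eq_inr ?eq_inrl /= eq_sig /= yf_onto //.
  by rewrite [RHS](other_inc h (valP t)).
by rewrite sig2_out /inc /= !eq_inr !eq_sig.
Qed.

Lemma inc_l_sig1 (x : edge G) (t : {x : vert G1 | x != v1}) :
  inc x (inl t : vert G) -> exists e, x = sig1 e.
Proof.
case: x => [[s|s]|j] h.
- by exists (val s); rewrite sig1_val.
- by move: h; rewrite /inc; case: s => ? ? /=; rewrite !eq_inlr.
- by exists (yf d1 j); rewrite sig1_yf.
Qed.

Lemma inc_r_sig2 (x : edge G) (t : {x : vert G2 | x != v2}) :
  inc x (inr t : vert G) -> exists e, x = sig2 e.
Proof.
case: x => [[s|s]|j] h.
- by move: h; rewrite /inc; case: s => ? ? /=; rewrite !eq_inrl.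
- by exists (val s); rewrite sig2_val.
- by exists (yf d2 j); rewrite sig2_yf.
Qed.

Lemma cover (x : edge G) : (exists e, x = sig1 e) \/ (exists e, x = sig2 e).
Proof.
case: x => [[s|s]|j].
- by left; exists (val s); rewrite sig1_val.
- by right; exists (val s); rewrite sig2_val.
- by left; exists (yf d1 j); rewrite sig1_yf.
Qed.

Lemma star_l (t : {x : vert G1 | x != v1}) :
  [set x : edge G | inc x (inl t : vert G)] = sig1 @: [set e | inc e (val t)].
Proof.
apply/setP => x; rewrite inE; apply/idP/imsetP => [h|[e]].
  have [e ex] := inc_l_sig1 h; exists e => //; by rewrite inE -inc_sig1 -ex.
by rewrite inE => he ->; rewrite inc_sig1.
Qed.

Lemma star_r (t : {x : vert G2 | x != v2}) :
  [set x : edge G | inc x (inr t : vert G)] = sig2 @: [set e | inc e (val t)].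
Proof.
apply/setP => x; rewrite inE; apply/idP/imsetP => [h|[e]].
  have [e ex] := inc_r_sig2 h; exists e => //; by rewrite inE -inc_sig2 -ex.
by rewrite inE => he ->; rewrite inc_sig2.
Qed.

Lemma Ycubic : cubic G.
Proof.
apply/andP; split.
  apply/forallP => -[[[e h]|[e h]]|j] /=; rewrite ?eq_inl ?eq_inr ?eq_sig //=.
  - exact: cub_loop.
  - exact: cub_loop.
apply/forallP => -[t|t]; apply/eqP; rewrite /deg.
  by rewrite star_l card_imset; [exact: cub_deg | exact: sig1_inj].
by rewrite star_r card_imset; [exact: cub_deg | exact: sig2_inj].
Qed.


Lemma Yloop (x : edge G) : (endpt x).1 != (endpt x).2.
Proof. by case/andP: Ycubic => /forallP /(_ x). Qed.

Definition isl (w : vert G) : bool := if w is inl _ then true else false.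
Definition Aset : {set vert G} := [set w | isl w].

Lemma cut_set (T : {set edge G}) :
  #|[set x in T | ((endpt x).1 \in Aset) != ((endpt x).2 \in Aset)]| =
  #|[set j : 'I_3 | (inr j : edge G) \in T]|.
Proof.
have -> : [set x in T | ((endpt x).1 \in Aset) != ((endpt x).2 \in Aset)] =
          (fun j => inr j : edge G) @: [set j : 'I_3 | (inr j : edge G) \in T].
  apply/setP => x; apply/idP/imsetP => [|[j]]; last by move=> hj ->; rewrite inE in hj; rewrite !inE /= hj.
  case: x => [[[e h]|[e h]]|j]; rewrite !inE /= ?andbF // => /andP[h1 _]; by exists j; rewrite ?inE.
by rewrite card_imset // => j k [].
Qed.

Lemma Ycut_count c a : Defs.proper c ->
  odd #|[set j : 'I_3 | c (inr j : edge G) == a]| = odd #|Aset|.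
Proof.
move=> pc.
have := parity Aset [set x : edge G | c x == a] Yloop.
rewrite cut_set.
have -> : [set j : 'I_3 | (inr j : edge G) \in [set x : edge G | c x == a]] = [set j : 'I_3 | c (inr j : edge G) == a].
  by apply/setP => j; rewrite !inE.
move=> <-; rewrite (@odd_sum_const _ _ _ true) //.
move=> u _; have -> : [set e in [set x : edge G | c x == a] | inc e u] = [set e | inc e u & c e == a].
  by apply/setP => e; rewrite !inE andbC.
by rewrite (color_count _ (cub_deg Ycubic u) pc).
Qed.

Lemma Ycut_inj c : Defs.proper c -> injective (fun j : 'I_3 => c (inr j : edge G)).
Proof.
move=> pc; apply: inj3.
apply: (@brute_distinct3 _ _ _ (odd #|Aset|)) => a.
by rewrite -(Ycut_count a pc) card3.
Qed.

Lemma Ycut_closed c a b S : Defs.proper c -> a != b -> closedb c a b S ->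
  forall j k, ab a b (c (inr j : edge G)) -> ab a b (c (inr k : edge G)) ->
  ((inr j : edge G) \in S) = ((inr k : edge G) \in S).
Proof.
move=> pc ab' cl.
have ev : ~~ odd #|[set j : 'I_3 | ab a b (c (inr j : edge G)) && ((inr j : edge G) \in S)]|.
  have := parity Aset [set x : edge G | ab a b (c x) && (x \in S)] Yloop.
  rewrite cut_set.
  have -> : [set j : 'I_3 | (inr j : edge G) \in [set x : edge G | ab a b (c x) && (x \in S)]] =
            [set j : 'I_3 | ab a b (c (inr j : edge G)) && ((inr j : edge G) \in S)].
    by apply/setP => j; rewrite !inE.
  move=> <-; rewrite (@odd_sum_const _ _ _ false) //.
  move=> u _; have -> : [set e in [set x : edge G | ab a b (c x) && (x \in S)] | inc e u] =
                        [set e | inc e u & ab a b (c e) && (e \in S)].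
    by apply/setP => e; rewrite !inE andbC.
  by apply/negbTE; apply: closed_count (cub_deg Ycubic u) pc ab' cl.
rewrite card3 in ev.
apply: (pairs3 (P := fun j => ab a b (c (inr j : edge G))) (s := fun j => (inr j : edge G) \in S)).
apply: brute_pair3 ab' ev.
have := Ycut_inj pc; move=> inj.
by apply/and3P; split; apply/negP => /eqP /inj.
Qed.


Definition r1 (c : coloring G) : coloring G1 := [ffun e => c (sig1 e)].
Definition r2 (c : coloring G) : coloring G2 := [ffun e => c (sig2 e)].

Lemma r1_cmap (pi : 'I_3 -> 'I_3) c : r1 (cmap pi c) = cmap pi (r1 c).
Proof. by apply/ffunP => e; rewrite !ffunE. Qed.
Lemma r2_cmap (pi : 'I_3 -> 'I_3) c : r2 (cmap pi c) = cmap pi (r2 c).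
Proof. by apply/ffunP => e; rewrite !ffunE. Qed.

Lemma Yprop1 c : Defs.proper c -> Defs.proper (r1 c).
Proof.
move=> pc; apply/propP => e f /adjP[ef [u [he hf]]]; rewrite !ffunE.
case: (eqVneq u v1) => [uv|uv].
  subst u; move: (yf_onto cub1 he) (yf_onto cub1 hf) => Ee Ef.
  rewrite -Ee -Ef !sig1_yf; apply: contra ef => /eqP /(Ycut_inj pc) h.
  by rewrite -Ee -Ef h.
set t : {x : vert G1 | x != v1} := exist _ u uv.
move/propP: pc; apply; apply/adjP; split; first by apply: contra ef => /eqP /sig1_inj ->.
by exists (inl t); rewrite !inc_sig1.
Qed.

Lemma Yprop2 c : Defs.proper c -> Defs.proper (r2 c).
Proof.
move=> pc; apply/propP => e f /adjP[ef [u [he hf]]]; rewrite !ffunE.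
case: (eqVneq u v2) => [uv|uv].
  subst u; move: (yf_onto cub2 he) (yf_onto cub2 hf) => Ee Ef.
  rewrite -Ee -Ef !sig2_yf; apply: contra ef => /eqP /(Ycut_inj pc) h.
  by rewrite -Ee -Ef h.
set t : {x : vert G2 | x != v2} := exist _ u uv.
move/propP: pc; apply; apply/adjP; split; first by apply: contra ef => /eqP /sig2_inj ->.
by exists (inr t); rewrite !inc_sig2.
Qed.

Lemma Yfwd1 c d : Defs.proper c -> gstep c d -> kempe_equiv (r1 c) (r1 d).
Proof.
move=> pc /gstepP[a [b [S [ab' cl ->]]]].
apply: gstep_kempe; apply/gstepP; exists a, b, [set e | sig1 e \in S]; split => //.
  apply/closedP => u e f he hf; rewrite !ffunE !inE => ae af.
  case: (eqVneq u v1) => [uv|uv].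
    subst u; move: (yf_onto cub1 he) (yf_onto cub1 hf) => Ee Ef.
    rewrite -Ee -Ef !sig1_yf in ae af *.
    exact: Ycut_closed pc ab' cl _ _ ae af.
  set t : {x : vert G1 | x != v1} := exist _ u uv.
  by move/closedP: cl => /(_ (inl t) (sig1 e) (sig1 f)); apply; rewrite ?inc_sig1.
by apply/ffunP => e; rewrite !ffunE inE.
Qed.

Lemma Yfwd2 c d : Defs.proper c -> gstep c d -> kempe_equiv (r2 c) (r2 d).
Proof.
move=> pc /gstepP[a [b [S [ab' cl ->]]]].
apply: gstep_kempe; apply/gstepP; exists a, b, [set e | sig2 e \in S]; split => //.
  apply/closedP => u e f he hf; rewrite !ffunE !inE => ae af.
  case: (eqVneq u v2) => [uv|uv].
    subst u; move: (yf_onto cub2 he) (yf_onto cub2 hf) => Ee Ef.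
    rewrite -Ee -Ef !sig2_yf in ae af *.
    exact: Ycut_closed pc ab' cl _ _ ae af.
  set t : {x : vert G2 | x != v2} := exist _ u uv.
  by move/closedP: cl => /(_ (inr t) (sig2 e) (sig2 f)); apply; rewrite ?inc_sig2.
by apply/ffunP => e; rewrite !ffunE inE.
Qed.


Lemma inl1_not_r (s : {e : edge G1 | ~~ inc e v1}) (w : vert G) :
  inc (inl (inl s) : edge G) w -> isl w.
Proof. by case: w => // t; rewrite /inc; case: s => ? ? /=. Qed.

Lemma inl2_not_l (s : {e : edge G2 | ~~ inc e v2}) (w : vert G) :
  inc (inl (inr s) : edge G) w -> ~~ isl w.
Proof. by case: w => // t; rewrite /inc; case: s => ? ? /=. Qed.

Lemma Ylift1_aux c a b S1 : Defs.proper c -> closedb (r1 c) a b S1 ->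
  (forall j, ab a b (c (inr j : edge G)) -> yf d1 j \notin S1) ->
  [/\ closedb c a b (sig1 @: S1), r1 (gswitch c a b (sig1 @: S1)) = gswitch (r1 c) a b S1 &
      r2 (gswitch c a b (sig1 @: S1)) = r2 c].
Proof.
move=> pc cl1 hcut.
have Sf : forall x, x \in sig1 @: S1 -> ab a b (c x) -> exists s, x = inl (inl s).
  move=> x /imsetP[e eS ->] ae.
  case: (boolP (inc e v1)) => he.
    move: (yf_onto cub1 he) => Ee; rewrite -Ee sig1_yf in ae.
    by move: (hcut _ ae); rewrite Ee eS.
  by exists (exist _ e he); rewrite sig1_out.
split.
- apply/closedP => -[t|t] x y hx hy ax ay.
    have [e ex] := inc_l_sig1 hx; have [f ey] := inc_l_sig1 hy; subst x y.
    rewrite !mem_imset; try exact: sig1_inj.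
    move: hx hy; rewrite !inc_sig1 => hx hy.
    by move/closedP: cl1 => /(_ (val t) e f hx hy); rewrite !ffunE; apply.
  have nS : forall z, inc z (inr t : vert G) -> ab a b (c z) -> z \notin sig1 @: S1.
    move=> z hz az; apply/negP => zS; have [s zs] := Sf z zS az.
    by move: hz; rewrite zs => /inl1_not_r.
  by rewrite (negbTE (nS x hx ax)) (negbTE (nS y hy ay)).
- by apply/ffunP => e; rewrite !ffunE mem_imset //; exact: sig1_inj.
- apply/ffunP => f; rewrite !ffunE; case: ifP => // fS.
  apply: swap_nab; apply/negP => af.
  have [s hs] := Sf _ fS af.
  case: (boolP (inc f v2)) => hf.
    by move: hs; rewrite sig2_in.
  by move: hs; rewrite sig2_out.
Qed.

Lemma Ylift2_aux c a b S2 : Defs.proper c -> closedb (r2 c) a b S2 ->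
  (forall j, ab a b (c (inr j : edge G)) -> yf d2 j \notin S2) ->
  [/\ closedb c a b (sig2 @: S2), r2 (gswitch c a b (sig2 @: S2)) = gswitch (r2 c) a b S2 &
      r1 (gswitch c a b (sig2 @: S2)) = r1 c].
Proof.
move=> pc cl2 hcut.
have Sf : forall x, x \in sig2 @: S2 -> ab a b (c x) -> exists s, x = inl (inr s).
  move=> x /imsetP[e eS ->] ae.
  case: (boolP (inc e v2)) => he.
    move: (yf_onto cub2 he) => Ee; rewrite -Ee sig2_yf in ae.
    by move: (hcut _ ae); rewrite Ee eS.
  by exists (exist _ e he); rewrite sig2_out.
split.
- apply/closedP => -[t|t] x y hx hy ax ay; last first.
    have [e ex] := inc_r_sig2 hx; have [f ey] := inc_r_sig2 hy; subst x y.
    rewrite !mem_imset; try exact: sig2_inj.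
    move: hx hy; rewrite !inc_sig2 => hx hy.
    by move/closedP: cl2 => /(_ (val t) e f hx hy); rewrite !ffunE; apply.
  have nS : forall z, inc z (inl t : vert G) -> ab a b (c z) -> z \notin sig2 @: S2.
    move=> z hz az; apply/negP => zS; have [s zs] := Sf z zS az.
    by move: hz; rewrite zs => /inl2_not_l.
  by rewrite (negbTE (nS x hx ax)) (negbTE (nS y hy ay)).
- by apply/ffunP => e; rewrite !ffunE mem_imset //; exact: sig2_inj.
- apply/ffunP => f; rewrite !ffunE; case: ifP => // fS.
  apply: swap_nab; apply/negP => af.
  have [s hs] := Sf _ fS af.
  case: (boolP (inc f v1)) => hf.
    by move: hs; rewrite sig1_in.
  by move: hs; rewrite sig1_out.
Qed.

Lemma Ylift1 c d : Defs.proper c -> gstep (r1 c) d ->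
  exists c', [/\ kempe_equiv c c', r1 c' = d & exists pi : {perm 'I_3}, r2 c' = cmap pi (r2 c)].
Proof.
move=> pc /gstepP[a [b [S1 [ab' cl1 ->]]]].
case: (boolP [exists j, ab a b (c (inr j : edge G)) && (yf d1 j \in S1)]) => [/existsP[j0 /andP[a0 s0]]|none].
  have hcut : forall j, ab a b (c (inr j : edge G)) -> yf d1 j \notin ~: S1.
    move=> j aj; rewrite inE negbK.
    move/closedP: cl1 => /(_ v1 (yf d1 j) (yf d1 j0) (yf_inc d1 j) (yf_inc d1 j0)).
    by rewrite !ffunE !sig1_yf => /(_ aj a0) ->.
  have [cl e1 e2] := Ylift1_aux pc (closed_compl cl1) hcut.
  exists (cmap (swap a b) (gswitch c a b (sig1 @: ~: S1))); split.
  - apply: kempe_trans (kempe_swap _ a b).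
    by apply: gstep_kempe; apply/gstepP; exists a, b, (sig1 @: ~: S1).
  - by rewrite r1_cmap e1 gswitch_compl; apply/ffunP => e; rewrite !ffunE swapK'.
  - exists (tperm a b); rewrite r2_cmap e2; apply/ffunP => e; by rewrite !ffunE tperm_swap.
have hcut : forall j, ab a b (c (inr j : edge G)) -> yf d1 j \notin S1.
  move=> j aj; apply/negP => js; move/existsP: none; apply; exists j; by rewrite aj js.
have [cl e1 e2] := Ylift1_aux pc cl1 hcut.
exists (gswitch c a b (sig1 @: S1)); split => //.
  by apply: gstep_kempe; apply/gstepP; exists a, b, (sig1 @: S1).
by exists 1%g; rewrite e2 cmap1.
Qed.

Lemma Ylift2 c d : Defs.proper c -> gstep (r2 c) d ->
  exists c', [/\ kempe_equiv c c', r2 c' = d & exists pi : {perm 'I_3}, r1 c' = cmap pi (r1 c)].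
Proof.
move=> pc /gstepP[a [b [S2 [ab' cl2 ->]]]].
case: (boolP [exists j, ab a b (c (inr j : edge G)) && (yf d2 j \in S2)]) => [/existsP[j0 /andP[a0 s0]]|none].
  have hcut : forall j, ab a b (c (inr j : edge G)) -> yf d2 j \notin ~: S2.
    move=> j aj; rewrite inE negbK.
    move/closedP: cl2 => /(_ v2 (yf d2 j) (yf d2 j0) (yf_inc d2 j) (yf_inc d2 j0)).
    by rewrite !ffunE !sig2_yf => /(_ aj a0) ->.
  have [cl e1 e2] := Ylift2_aux pc (closed_compl cl2) hcut.
  exists (cmap (swap a b) (gswitch c a b (sig2 @: ~: S2))); split.
  - apply: kempe_trans (kempe_swap _ a b).
    by apply: gstep_kempe; apply/gstepP; exists a, b, (sig2 @: ~: S2).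
  - by rewrite r2_cmap e1 gswitch_compl; apply/ffunP => e; rewrite !ffunE swapK'.
  - exists (tperm a b); rewrite r1_cmap e2; apply/ffunP => e; by rewrite !ffunE tperm_swap.
have hcut : forall j, ab a b (c (inr j : edge G)) -> yf d2 j \notin S2.
  move=> j aj; apply/negP => js; move/existsP: none; apply; exists j; by rewrite aj js.
have [cl e1 e2] := Ylift2_aux pc cl2 hcut.
exists (gswitch c a b (sig2 @: S2)); split => //.
  by apply: gstep_kempe; apply/gstepP; exists a, b, (sig2 @: S2).
by exists 1%g; rewrite e2 cmap1.
Qed.


Lemma Yfix c c' (pi : {perm 'I_3}) : Defs.proper c -> Defs.proper c' ->
  r2 c' = r2 c -> r1 c' = cmap pi (r1 c) -> kempe_equiv c c'.
Proof.
move=> pc pc' e2 e1.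
have cut : forall j, c' (inr j : edge G) = c (inr j : edge G).
  by move=> j; move/ffunP: e2 => /(_ (yf d2 j)); rewrite !ffunE sig2_yf.
have hpi : forall z, pi z = z.
  move=> z; have /codomP[j ->] := injF_onto (Ycut_inj pc) z.
  by move/ffunP: e1 => /(_ (yf d1 j)); rewrite !ffunE sig1_yf cut => <-.
have -> : c' = c.
  apply/ffunP => x; case: (cover x) => -[e ->].
    by move/ffunP: e1 => /(_ e); rewrite !ffunE hpi.
  by move/ffunP: e2 => /(_ e); rewrite !ffunE.
exact: kempe_refl.
Qed.

Lemma Ysurj p1 p2 : Defs.proper p1 -> Defs.proper p2 ->
  exists c, [/\ Defs.proper c, kempe_equiv (r1 c) p1 & kempe_equiv (r2 c) p2].
Proof.
move=> pp1 pp2.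
have inj1 : injective (fun j => p1 (yf d1 j)).
  move=> j k h; apply: (@yf_inj _ d1); exact: proper_at pp1 (yf_inc d1 j) (yf_inc d1 k) h.
have inj2 : injective (fun j => p2 (yf d2 j)).
  move=> j k h; apply: (@yf_inj _ d2); exact: proper_at pp2 (yf_inc d2 j) (yf_inc d2 k) h.
pose g1 := perm inj1; pose g2 := perm inj2.
pose pi := (g2^-1 * g1)%g.
have hpi : forall j, pi (p2 (yf d2 j)) = p1 (yf d1 j).
  move=> j; rewrite /pi permM.
  have -> : p2 (yf d2 j) = g2 j by rewrite permE.
  by rewrite permK permE.
pose c : coloring G := [ffun x : edge G => match x with
   | inl (inl s) => p1 (val s) | inl (inr s) => pi (p2 (val s)) | inr j => p1 (yf d1 j) end].
have e1 : r1 c = p1.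
  apply/ffunP => e; rewrite !ffunE.
  case: (boolP (inc e v1)) => he; last by rewrite sig1_out.
  by rewrite sig1_in //= yf_onto.
have e2 : r2 c = cmap pi p2.
  apply/ffunP => e; rewrite !ffunE.
  case: (boolP (inc e v2)) => he; last by rewrite sig2_out.
  by rewrite sig2_in //= -hpi yf_onto.
exists c; split.
- apply/propP => x y /adjP[xy [[t|t] [hx hy]]].
    have [e ex] := inc_l_sig1 hx; have [f ey] := inc_l_sig1 hy; subst x y.
    move: hx hy; rewrite !inc_sig1 => hx hy.
    have : r1 c e != r1 c f.
      rewrite e1; move/propP: pp1; apply; apply/adjP; split.
        by apply: contra xy => /eqP ->.
      by exists (val t).
    by rewrite !ffunE.
  have [e ex] := inc_r_sig2 hx; have [f ey] := inc_r_sig2 hy; subst x y.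
  move: hx hy; rewrite !inc_sig2 => hx hy.
  have : r2 c e != r2 c f.
    rewrite e2 !ffunE; rewrite (inj_eq perm_inj); move/propP: pp2; apply; apply/adjP; split.
      by apply: contra xy => /eqP ->.
    by exists (val t).
  by rewrite !ffunE.
- by rewrite e1 kempe_refl.
- by rewrite e2 kempe_sym kempe_perm.
Qed.

Theorem Ytheorem : Kprime G = Kprime G1 * Kprime G2.
Proof.
apply: (@glue _ _ _ r1 r2).
- by move=> c pc; split; [apply: Yprop1 | apply: Yprop2].
- exact: Yfwd1.
- exact: Yfwd2.
- exact: Ylift1.
- exact: Ylift2.
- exact: Yfix.
- exact: Ysurj.
Qed.

End Ycore.

Lemma card2b (P : pred bool) : #|[set j | P j]| = P false + P true.
Proof.
rewrite -sum1dep_card big_mkcond /= (eq_bigr (fun j => nat_of_bool (P j))); last by move=> j _; case: (P j).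
by rewrite big_bool addnC.
Qed.

Lemma other2 (x : 'I_3) : exists y z : 'I_3, [/\ y != z, y != x, z != x & forall w, [|| w == x, w == y | w == z]].
Proof.
case: (ord3_cases x) => ->.
- by exists o1, o2; split => // w; case: (ord3_cases w) => ->.
- by exists o0, o2; split => // w; case: (ord3_cases w) => ->.
- by exists o0, o1; split => // w; case: (ord3_cases w) => ->.
Qed.

Lemma oends_inc (G : mgraph) (e : edge G) fl u :
  inc e u = (u == (oends e fl).1) || (u == (oends e fl).2).
Proof. by rewrite /inc /oends; case: fl => //=; rewrite orbC. Qed.

Lemma oends_neq (G : mgraph) (e : edge G) fl : cubic G -> (oends e fl).1 != (oends e fl).2.
Proof. by move=> cub; rewrite /oends; case: fl => //=; rewrite ?(eq_sym (endpt e).2) cub_loop. Qed.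

Section Hcore.
Variables (G1 G2 : mgraph) (e1 : edge G1) (fl1 : bool) (e2 : edge G2) (fl2 : bool).
Hypotheses (cub1 : cubic G1) (cub2 : cubic G2).

Local Notation G := (Hcomp e1 fl1 e2 fl2).
Local Notation s11 := (oends e1 fl1).1.
Local Notation s12 := (oends e1 fl1).2.
Local Notation s21 := (oends e2 fl2).1.
Local Notation s22 := (oends e2 fl2).2.

Definition hsig1 (e : edge G1) : edge G :=
  match (insub e : option {e : edge G1 | e != e1}) with
  | Some s => inl (inl s) | None => inr false end.

Definition hsig2 (e : edge G2) : edge G :=
  match (insub e : option {e : edge G2 | e != e2}) with
  | Some s => inl (inr s) | None => inr true end.

Definition rho1 (x : edge G) : edge G1 := if x is inl (inl s) then val s else e1.
Definition rho2 (x : edge G) : edge G2 := if x is inl (inr s) then val s else e2.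

Lemma hsig1_out e (h : e != e1) : hsig1 e = inl (inl (exist _ e h)).
Proof. by rewrite /hsig1 (insubT (fun e => e != e1) h). Qed.
Lemma hsig2_out e (h : e != e2) : hsig2 e = inl (inr (exist _ e h)).
Proof. by rewrite /hsig2 (insubT (fun e => e != e2) h). Qed.
Lemma hsig1_e1 : hsig1 e1 = inr false.
Proof. by rewrite /hsig1 insubN // negbK. Qed.
Lemma hsig2_e2 : hsig2 e2 = inr true.
Proof. by rewrite /hsig2 insubN // negbK. Qed.

Lemma hsig1_val (s : {e : edge G1 | e != e1}) : hsig1 (val s) = inl (inl s).
Proof. by case: s => e h; rewrite hsig1_out. Qed.
Lemma hsig2_val (s : {e : edge G2 | e != e2}) : hsig2 (val s) = inl (inr s).
Proof. by case: s => e h; rewrite hsig2_out. Qed.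

Lemma hcover (x : edge G) : (exists e, x = hsig1 e) \/ (exists e, x = hsig2 e).
Proof.
case: x => [[s|s]|[]].
- by left; exists (val s); rewrite hsig1_val.
- by right; exists (val s); rewrite hsig2_val.
- by right; exists e2; rewrite hsig2_e2.
- by left; exists e1; rewrite hsig1_e1.
Qed.

Lemma hinc_ll (s : {e : edge G1 | e != e1}) u : inc (inl (inl s) : edge G) (inl u : vert G) = inc (val s) u.
Proof. by case: s => e h; rewrite /inc /= !eq_inl. Qed.
Lemma hinc_lr (s : {e : edge G1 | e != e1}) u : inc (inl (inl s) : edge G) (inr u : vert G) = false.
Proof. by case: s => e h; rewrite /inc /=. Qed.
Lemma hinc_rl (s : {e : edge G2 | e != e2}) u : inc (inl (inr s) : edge G) (inl u : vert G) = false.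
Proof. by case: s => e h; rewrite /inc /=. Qed.
Lemma hinc_rr (s : {e : edge G2 | e != e2}) u : inc (inl (inr s) : edge G) (inr u : vert G) = inc (val s) u.
Proof. by case: s => e h; rewrite /inc /= !eq_inr. Qed.
Lemma hinc_bl (b : bool) u : inc (inr b : edge G) (inl u : vert G) = (u == if b then s12 else s11).
Proof. by case: b; rewrite /inc /= eq_inl ?orbF. Qed.
Lemma hinc_br (b : bool) u : inc (inr b : edge G) (inr u : vert G) = (u == if b then s22 else s21).
Proof. by case: b; rewrite /inc /= eq_inr. Qed.

Lemma Hloop (x : edge G) : (endpt x).1 != (endpt x).2.
Proof.
case: x => [[[e h]|[e h]]|[]] //=; rewrite ?eq_inl ?eq_inr; exact: cub_loop.
Qed.

Lemma rho1_inc (x : edge G) u : inc x (inl u : vert G) -> inc (rho1 x) u.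
Proof.
case: x => [[s|s]|b].
- by rewrite hinc_ll.
- by rewrite hinc_rl.
- rewrite hinc_bl => /eqP hu; rewrite hu.
  by rewrite (oends_inc e1 fl1); case: b {hu}; rewrite eqxx ?orbT.
Qed.

Lemma rho1_inj (x y : edge G) u : inc x (inl u : vert G) -> inc y (inl u : vert G) ->
  rho1 x = rho1 y -> x = y.
Proof.
case: x => [[s|s]|b]; case: y => [[s'|s']|b'];
  rewrite ?hinc_ll ?hinc_rl ?hinc_bl //=.
- by move=> _ _ h; congr (inl (inl _)); apply: val_inj.
- by case: s => x p _ _ /= h; exfalso; move: (p); rewrite h eqxx.
- by case: s' => x p _ _ /= h; exfalso; move: (p); rewrite -h eqxx.
- move=> /eqP hb /eqP hb'; case: b b' hb hb' => [] [] // -> h; move: (oends_neq e1 fl1 cub1);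
    by rewrite h eqxx.
Qed.

Lemma rho1_onto g u : inc g u -> exists2 x, inc x (inl u : vert G) & rho1 x = g.
Proof.
move=> hg; case: (eqVneq g e1) => [ge|gn].
  subst g; move: hg; rewrite (oends_inc e1 fl1) => /orP[/eqP hu|/eqP hu].
    by exists (inr false); rewrite // hinc_bl hu.
  by exists (inr true); rewrite // hinc_bl hu.
by exists (inl (inl (exist _ g gn))); rewrite ?hinc_ll.
Qed.

Lemma rho2_inc (x : edge G) u : inc x (inr u : vert G) -> inc (rho2 x) u.
Proof.
case: x => [[s|s]|b].
- by rewrite hinc_lr.
- by rewrite hinc_rr.
- rewrite hinc_br => /eqP hu; rewrite hu.
  by rewrite (oends_inc e2 fl2); case: b {hu}; rewrite eqxx ?orbT.
Qed.

Lemma rho2_inj (x y : edge G) u : inc x (inr u : vert G) -> inc y (inr u : vert G) ->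
  rho2 x = rho2 y -> x = y.
Proof.
case: x => [[s|s]|b]; case: y => [[s'|s']|b'];
  rewrite ?hinc_lr ?hinc_rr ?hinc_br //=.
- by move=> _ _ h; congr (inl (inr _)); apply: val_inj.
- by case: s => x p _ _ /= h; exfalso; move: (p); rewrite h eqxx.
- by case: s' => x p _ _ /= h; exfalso; move: (p); rewrite -h eqxx.
- move=> /eqP hb /eqP hb'; case: b b' hb hb' => [] [] // -> h; move: (oends_neq e2 fl2 cub2);
    by rewrite h eqxx.
Qed.

Lemma rho2_onto g u : inc g u -> exists2 x, inc x (inr u : vert G) & rho2 x = g.
Proof.
move=> hg; case: (eqVneq g e2) => [ge|gn].
  subst g; move: hg; rewrite (oends_inc e2 fl2) => /orP[/eqP hu|/eqP hu].
    by exists (inr false); rewrite // hinc_br hu.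
  by exists (inr true); rewrite // hinc_br hu.
by exists (inl (inr (exist _ g gn))); rewrite ?hinc_rr.
Qed.


Lemma Hdeg_l u : deg (inl u : vert G) = 3.
Proof.
rewrite /deg -(cub_deg cub1 u) /deg.
have -> : [set e | inc e u] = rho1 @: [set x : edge G | inc x (inl u : vert G)].
  apply/setP => g; rewrite inE; apply/idP/imsetP => [hg|[x]].
    by have [x hx <-] := rho1_onto hg; exists x; rewrite ?inE.
  by rewrite inE => hx ->; apply: rho1_inc.
rewrite card_in_imset // => x y; rewrite !inE => hx hy; exact: rho1_inj hx hy.
Qed.

Lemma Hdeg_r u : deg (inr u : vert G) = 3.
Proof.
rewrite /deg -(cub_deg cub2 u) /deg.
have -> : [set e | inc e u] = rho2 @: [set x : edge G | inc x (inr u : vert G)].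
  apply/setP => g; rewrite inE; apply/idP/imsetP => [hg|[x]].
    by have [x hx <-] := rho2_onto hg; exists x; rewrite ?inE.
  by rewrite inE => hx ->; apply: rho2_inc.
rewrite card_in_imset // => x y; rewrite !inE => hx hy; exact: rho2_inj hx hy.
Qed.

Lemma Hcubic : cubic G.
Proof.
apply/andP; split; first by apply/forallP => x; exact: Hloop.
by apply/forallP => -[u|u]; apply/eqP; [exact: Hdeg_l | exact: Hdeg_r].
Qed.


Definition hisl (w : vert G) : bool := if w is inl _ then true else false.
Definition HAset : {set vert G} := [set w | hisl w].

Lemma Hcut_set (T : {set edge G}) :
  #|[set x in T | ((endpt x).1 \in HAset) != ((endpt x).2 \in HAset)]| =
  #|[set j : bool | (inr j : edge G) \in T]|.
Proof.
have -> : [set x in T | ((endpt x).1 \in HAset) != ((endpt x).2 \in HAset)] =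
          (fun j => inr j : edge G) @: [set j : bool | (inr j : edge G) \in T].
  apply/setP => x; apply/idP/imsetP => [|[j]]; last first.
    by move=> hj ->; rewrite inE in hj; case: j hj => hj; rewrite !inE /= hj.
  case: x => [[[e h]|[e h]]|j]; rewrite !inE /= ?andbF // => /andP[h1 _]; by exists j; rewrite ?inE.
by rewrite card_imset // => j k [].
Qed.

Lemma Hcut_eq c : Defs.proper c -> c (inr false : edge G) = c (inr true : edge G).
Proof.
move=> pc; apply: (@brute_equal2 _ _ (odd #|HAset|)) => a.
have := parity HAset [set x : edge G | c x == a] Hloop.
rewrite Hcut_set card2b !inE => <-.
rewrite (@odd_sum_const _ _ _ true) //.
move=> w _; have -> : [set e in [set x : edge G | c x == a] | inc e (w : vert G)] = [set e | inc e (w : vert G) & c e == a]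
  by apply/setP => e; rewrite !inE andbC.
case: w => u.
- by rewrite (color_count _ (Hdeg_l u) pc).
- by rewrite (color_count _ (Hdeg_r u) pc).
Qed.

Lemma Hcut_closed c a b S : Defs.proper c -> a != b -> closedb c a b S ->
  ab a b (c (inr false : edge G)) -> ((inr false : edge G) \in S) = ((inr true : edge G) \in S).
Proof.
move=> pc ab' cl af.
have := parity HAset [set x : edge G | ab a b (c x) && (x \in S)] Hloop.
rewrite Hcut_set card2b !inE -(Hcut_eq pc) af /=.
rewrite (@odd_sum_const _ _ _ false).
  by case: ((inr false : edge G) \in S); case: ((inr true : edge G) \in S).
move=> w _; have -> : [set e in [set x : edge G | ab a b (c x) && (x \in S)] | inc e (w : vert G)] =
                          [set e | inc e (w : vert G) & ab a b (c e) && (e \in S)]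
  by apply/setP => e; rewrite !inE andbC.
case: w => u.
- by apply/negbTE; apply: closed_count (Hdeg_l u) pc ab' cl.
- by apply/negbTE; apply: closed_count (Hdeg_r u) pc ab' cl.
Qed.

Lemma Hcol1 c (x : edge G) u : Defs.proper c -> inc x (inl u : vert G) -> c x = c (hsig1 (rho1 x)).
Proof.
move=> pc; case: x => [[s|s]|[]] /=.
- by rewrite hsig1_val.
- by rewrite hinc_rl.
- by rewrite hsig1_e1 -(Hcut_eq pc).
- by rewrite hsig1_e1.
Qed.

Lemma Hcol2 c (x : edge G) u : Defs.proper c -> inc x (inr u : vert G) -> c x = c (hsig2 (rho2 x)).
Proof.
move=> pc; case: x => [[s|s]|[]] /=.
- by rewrite hinc_lr.
- by rewrite hsig2_val.
- by rewrite hsig2_e2.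
- by rewrite hsig2_e2 (Hcut_eq pc).
Qed.

Lemma HS1 c a b S (x : edge G) u : Defs.proper c -> a != b -> closedb c a b S ->
  inc x (inl u : vert G) -> ab a b (c x) -> (x \in S) = (hsig1 (rho1 x) \in S).
Proof.
move=> pc ab' cl; case: x => [[s|s]|[]] /=.
- by rewrite hsig1_val.
- by rewrite hinc_rl.
- by move=> _ ax; rewrite hsig1_e1 (Hcut_closed pc ab' cl) // (Hcut_eq pc).
- by rewrite hsig1_e1.
Qed.

Lemma HS2 c a b S (x : edge G) u : Defs.proper c -> a != b -> closedb c a b S ->
  inc x (inr u : vert G) -> ab a b (c x) -> (x \in S) = (hsig2 (rho2 x) \in S).
Proof.
move=> pc ab' cl; case: x => [[s|s]|[]] /=.
- by rewrite hinc_lr.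
- by rewrite hsig2_val.
- by rewrite hsig2_e2.
- by move=> _ ax; rewrite hsig2_e2 (Hcut_closed pc ab' cl).
Qed.

Lemma hsig1_inj : injective hsig1.
Proof.
move=> e f; case: (eqVneq e e1) => [->|he]; case: (eqVneq f e1) => [->|hf] //;
  rewrite ?hsig1_e1 ?hsig1_out //.
by move=> -[].
Qed.

Lemma hsig2_inj : injective hsig2.
Proof.
move=> e f; case: (eqVneq e e2) => [->|he]; case: (eqVneq f e2) => [->|hf] //;
  rewrite ?hsig2_e2 ?hsig2_out //.
by move=> -[].
Qed.

Definition hr1 (c : coloring G) : coloring G1 := [ffun e => c (hsig1 e)].
Definition hr2 (c : coloring G) : coloring G2 := [ffun e => c (hsig2 e)].

Lemma hr1_cmap (pi : 'I_3 -> 'I_3) c : hr1 (cmap pi c) = cmap pi (hr1 c).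
Proof. by apply/ffunP => e; rewrite !ffunE. Qed.
Lemma hr2_cmap (pi : 'I_3 -> 'I_3) c : hr2 (cmap pi c) = cmap pi (hr2 c).
Proof. by apply/ffunP => e; rewrite !ffunE. Qed.

Lemma Hprop1 c : Defs.proper c -> Defs.proper (hr1 c).
Proof.
move=> pc; apply/propP => e f /adjP[ef [u [he hf]]]; rewrite !ffunE.
have [x hx rx] := rho1_onto he; have [y hy ry] := rho1_onto hf.
rewrite -rx -ry -(Hcol1 pc hx) -(Hcol1 pc hy).
move/propP: pc; apply; apply/adjP; split; last by exists (inl u).
by apply: contra ef => /eqP xy; rewrite -rx -ry xy.
Qed.

Lemma Hprop2 c : Defs.proper c -> Defs.proper (hr2 c).
Proof.
move=> pc; apply/propP => e f /adjP[ef [u [he hf]]]; rewrite !ffunE.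
have [x hx rx] := rho2_onto he; have [y hy ry] := rho2_onto hf.
rewrite -rx -ry -(Hcol2 pc hx) -(Hcol2 pc hy).
move/propP: pc; apply; apply/adjP; split; last by exists (inr u).
by apply: contra ef => /eqP xy; rewrite -rx -ry xy.
Qed.

Lemma Hfwd1 c d : Defs.proper c -> gstep c d -> kempe_equiv (hr1 c) (hr1 d).
Proof.
move=> pc /gstepP[a [b [S [ab' cl ->]]]].
apply: gstep_kempe; apply/gstepP; exists a, b, [set e | hsig1 e \in S]; split => //.
  apply/closedP => u e f he hf; rewrite !ffunE !inE => ae af.
  have [x hx rx] := rho1_onto he; have [y hy ry] := rho1_onto hf.
  rewrite -rx -ry -(Hcol1 pc hx) -(Hcol1 pc hy) in ae af.
  rewrite -rx -ry -(HS1 pc ab' cl hx ae) -(HS1 pc ab' cl hy af).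
  by move/closedP: cl => /(_ _ x y hx hy ae af).
by apply/ffunP => e; rewrite !ffunE inE.
Qed.

Lemma Hfwd2 c d : Defs.proper c -> gstep c d -> kempe_equiv (hr2 c) (hr2 d).
Proof.
move=> pc /gstepP[a [b [S [ab' cl ->]]]].
apply: gstep_kempe; apply/gstepP; exists a, b, [set e | hsig2 e \in S]; split => //.
  apply/closedP => u e f he hf; rewrite !ffunE !inE => ae af.
  have [x hx rx] := rho2_onto he; have [y hy ry] := rho2_onto hf.
  rewrite -rx -ry -(Hcol2 pc hx) -(Hcol2 pc hy) in ae af.
  rewrite -rx -ry -(HS2 pc ab' cl hx ae) -(HS2 pc ab' cl hy af).
  by move/closedP: cl => /(_ _ x y hx hy ae af).
by apply/ffunP => e; rewrite !ffunE inE.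
Qed.


Lemma Hlift1_aux c a b S1 : Defs.proper c -> a != b -> closedb (hr1 c) a b S1 ->
  (ab a b (c (inr false : edge G)) -> e1 \notin S1) ->
  [/\ closedb c a b (hsig1 @: (S1 :\ e1)),
      hr1 (gswitch c a b (hsig1 @: (S1 :\ e1))) = gswitch (hr1 c) a b S1 &
      hr2 (gswitch c a b (hsig1 @: (S1 :\ e1))) = hr2 c].
Proof.
move=> pc ab' cl1 hc.
set S := hsig1 @: (S1 :\ e1).
have Sf : forall x, x \in S -> exists s, x = inl (inl s).
  move=> x /imsetP[e]; rewrite !inE => /andP[ne _] ->.
  by exists (exist _ e ne); rewrite hsig1_out.
have memS : forall x u, inc x (inl u : vert G) -> ab a b (c x) -> (x \in S) = (rho1 x \in S1).
  move=> x u; case: x => [[s|s]|bb] hx ax.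
  - rewrite -hsig1_val mem_imset; last exact: hsig1_inj.
    move: (valP s) => /= h; by rewrite !inE /= h hsig1_val.
  - by move: hx; rewrite hinc_rl.
  - have -> : (inr bb : edge G) \in S = false.
      by apply/negP => /Sf[s].
    have ax' : ab a b (c (inr false : edge G)) by move: ax; case: (bb) => //; rewrite (Hcut_eq pc).
    by rewrite /= (negbTE (hc ax')).
split.
- apply/closedP => -[u|u] x y hx hy ax ay.
    rewrite (memS x u hx ax) (memS y u hy ay).
    move/closedP: cl1 => /(_ u (rho1 x) (rho1 y) (rho1_inc hx) (rho1_inc hy)); rewrite !ffunE.
    by rewrite -(Hcol1 pc hx) -(Hcol1 pc hy); apply.
  have nS : forall z, inc z (inr u : vert G) -> z \notin S.
    by move=> z hz; apply/negP => /Sf[s zs]; move: hz; rewrite zs hinc_lr.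
  by rewrite (negbTE (nS x hx)) (negbTE (nS y hy)).
- apply/ffunP => e; rewrite !ffunE.
  case: (eqVneq e e1) => [->|ne].
    have -> : hsig1 e1 \in S = false by apply/negP; rewrite hsig1_e1 => /Sf[s].
    case: ifP => // e1S; rewrite hsig1_e1 swap_nab //; apply/negP => ax.
    by move: (hc ax); rewrite e1S.
  by rewrite mem_imset ?inE ?ne //; exact: hsig1_inj.
- apply/ffunP => f; rewrite !ffunE.
  have -> : hsig2 f \in S = false.
    apply/negP => /Sf[s]; case: (eqVneq f e2) => [->|ne]; first by rewrite hsig2_e2.
    by rewrite hsig2_out.
  by [].
Qed.

Lemma Hlift2_aux c a b S2 : Defs.proper c -> a != b -> closedb (hr2 c) a b S2 ->
  (ab a b (c (inr true : edge G)) -> e2 \notin S2) ->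
  [/\ closedb c a b (hsig2 @: (S2 :\ e2)),
      hr2 (gswitch c a b (hsig2 @: (S2 :\ e2))) = gswitch (hr2 c) a b S2 &
      hr1 (gswitch c a b (hsig2 @: (S2 :\ e2))) = hr1 c].
Proof.
move=> pc ab' cl2 hc.
set S := hsig2 @: (S2 :\ e2).
have Sf : forall x, x \in S -> exists s, x = inl (inr s).
  move=> x /imsetP[e]; rewrite !inE => /andP[ne _] ->.
  by exists (exist _ e ne); rewrite hsig2_out.
have memS : forall x u, inc x (inr u : vert G) -> ab a b (c x) -> (x \in S) = (rho2 x \in S2).
  move=> x u; case: x => [[s|s]|bb] hx ax.
  - by move: hx; rewrite hinc_lr.
  - rewrite -hsig2_val mem_imset; last exact: hsig2_inj.
    move: (valP s) => /= h; by rewrite !inE /= h hsig2_val.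
  - have -> : (inr bb : edge G) \in S = false.
      by apply/negP => /Sf[s].
    have ax' : ab a b (c (inr true : edge G)) by move: ax; case: (bb) => //; rewrite (Hcut_eq pc).
    by rewrite /= (negbTE (hc ax')).
split.
- apply/closedP => -[u|u] x y hx hy ax ay; last first.
    rewrite (memS x u hx ax) (memS y u hy ay).
    move/closedP: cl2 => /(_ u (rho2 x) (rho2 y) (rho2_inc hx) (rho2_inc hy)); rewrite !ffunE.
    by rewrite -(Hcol2 pc hx) -(Hcol2 pc hy); apply.
  have nS : forall z, inc z (inl u : vert G) -> z \notin S.
    by move=> z hz; apply/negP => /Sf[s zs]; move: hz; rewrite zs hinc_rl.
  by rewrite (negbTE (nS x hx)) (negbTE (nS y hy)).
- apply/ffunP => e; rewrite !ffunE.
  case: (eqVneq e e2) => [->|ne].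
    have -> : hsig2 e2 \in S = false by apply/negP; rewrite hsig2_e2 => /Sf[s].
    case: ifP => // e2S; rewrite hsig2_e2 swap_nab //; apply/negP => ax.
    by move: (hc ax); rewrite e2S.
  by rewrite mem_imset ?inE ?ne //; exact: hsig2_inj.
- apply/ffunP => f; rewrite !ffunE.
  have -> : hsig1 f \in S = false.
    apply/negP => /Sf[s]; case: (eqVneq f e1) => [->|ne]; first by rewrite hsig1_e1.
    by rewrite hsig1_out.
  by [].
Qed.

Lemma Hlift1 c d : Defs.proper c -> gstep (hr1 c) d ->
  exists c', [/\ kempe_equiv c c', hr1 c' = d & exists pi : {perm 'I_3}, hr2 c' = cmap pi (hr2 c)].
Proof.
move=> pc /gstepP[a [b [S1 [ab' cl1 ->]]]].
case: (boolP (ab a b (c (inr false : edge G)) && (e1 \in S1))) => [/andP[a0 s0]|none].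
  have hc : ab a b (c (inr false : edge G)) -> e1 \notin ~: S1 by rewrite inE negbK.
  have [cl e1' e2'] := Hlift1_aux pc ab' (closed_compl cl1) hc.
  exists (cmap (swap a b) (gswitch c a b (hsig1 @: (~: S1 :\ e1)))); split.
  - apply: kempe_trans (kempe_swap _ a b).
    by apply: gstep_kempe; apply/gstepP; exists a, b, (hsig1 @: (~: S1 :\ e1)).
  - by rewrite hr1_cmap e1' gswitch_compl; apply/ffunP => e; rewrite !ffunE swapK'.
  - exists (tperm a b); rewrite hr2_cmap e2'; apply/ffunP => e; by rewrite !ffunE tperm_swap.
have hc : ab a b (c (inr false : edge G)) -> e1 \notin S1.
  by move=> ax; apply/negP => es; move: none; rewrite ax es.
have [cl e1' e2'] := Hlift1_aux pc ab' cl1 hc.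
exists (gswitch c a b (hsig1 @: (S1 :\ e1))); split => //.
  by apply: gstep_kempe; apply/gstepP; exists a, b, (hsig1 @: (S1 :\ e1)).
by exists 1%g; rewrite e2' cmap1.
Qed.

Lemma Hlift2 c d : Defs.proper c -> gstep (hr2 c) d ->
  exists c', [/\ kempe_equiv c c', hr2 c' = d & exists pi : {perm 'I_3}, hr1 c' = cmap pi (hr1 c)].
Proof.
move=> pc /gstepP[a [b [S2 [ab' cl2 ->]]]].
case: (boolP (ab a b (c (inr true : edge G)) && (e2 \in S2))) => [/andP[a0 s0]|none].
  have hc : ab a b (c (inr true : edge G)) -> e2 \notin ~: S2 by rewrite inE negbK.
  have [cl e1' e2'] := Hlift2_aux pc ab' (closed_compl cl2) hc.
  exists (cmap (swap a b) (gswitch c a b (hsig2 @: (~: S2 :\ e2)))); split.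
  - apply: kempe_trans (kempe_swap _ a b).
    by apply: gstep_kempe; apply/gstepP; exists a, b, (hsig2 @: (~: S2 :\ e2)).
  - by rewrite hr2_cmap e1' gswitch_compl; apply/ffunP => e; rewrite !ffunE swapK'.
  - exists (tperm a b); rewrite hr1_cmap e2'; apply/ffunP => e; by rewrite !ffunE tperm_swap.
have hc : ab a b (c (inr true : edge G)) -> e2 \notin S2.
  by move=> ax; apply/negP => es; move: none; rewrite ax es.
have [cl e1' e2'] := Hlift2_aux pc ab' cl2 hc.
exists (gswitch c a b (hsig2 @: (S2 :\ e2))); split => //.
  by apply: gstep_kempe; apply/gstepP; exists a, b, (hsig2 @: (S2 :\ e2)).
by exists 1%g; rewrite e2' cmap1.
Qed.


Definition isll (x : edge G) : bool := if x is inl (inl _) then true else false.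

Lemma Hfix c c' (pi : {perm 'I_3}) : Defs.proper c -> Defs.proper c' ->
  hr2 c' = hr2 c -> hr1 c' = cmap pi (hr1 c) -> kempe_equiv c c'.
Proof.
move=> pc pc' E2 E1.
have ct : c' (inr true : edge G) = c (inr true : edge G).
  by move/ffunP: E2 => /(_ e2); rewrite !ffunE hsig2_e2.
have cf : c' (inr false : edge G) = c (inr false : edge G).
  by rewrite (Hcut_eq pc') ct (Hcut_eq pc).
set x := c (inr false : edge G).
have pix : pi x = x.
  by move/ffunP: E1 => /(_ e1); rewrite !ffunE hsig1_e1 cf.
have [y [z [yz yx zx hall]]] := other2 x.
have piy : pi y != x by rewrite -pix (inj_eq perm_inj).
have piz : pi z != x by rewrite -pix (inj_eq perm_inj).
have E1' : forall s : {e : edge G1 | e != e1}, c' (inl (inl s) : edge G) = pi (c (inl (inl s) : edge G)).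
  by move=> s; move/ffunP: E1 => /(_ (val s)); rewrite !ffunE hsig1_val.
have E2' : forall s : {e : edge G2 | e != e2}, c' (inl (inr s) : edge G) = c (inl (inr s) : edge G).
  by move=> s; move/ffunP: E2 => /(_ (val s)); rewrite !ffunE hsig2_val.
case/or3P: (hall (pi y)) => [/eqP h|/eqP h|/eqP h]; first by rewrite h eqxx in piy.
  have hpz : pi z = z.
    case/or3P: (hall (pi z)) => [/eqP h'|/eqP h'|/eqP h'] //; first by rewrite h' eqxx in piz.
    have : pi y == pi z by rewrite h h'.
    by rewrite (inj_eq perm_inj) (negbTE yz).
  have hp : forall w, pi w = w.
    by move=> w; case/or3P: (hall w) => /eqP ->.
  have -> : c' = c.
    apply/ffunP => -[[s|s]|[]]; by rewrite ?E1' ?E2' ?hp ?ct ?cf.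
  exact: kempe_refl.
have hpz : pi z = y.
  case/or3P: (hall (pi z)) => [/eqP h'|/eqP h'|/eqP h'] //; first by rewrite h' eqxx in piz.
  have : pi y == pi z by rewrite h h'.
  by rewrite (inj_eq perm_inj) (negbTE yz).
have hp : forall w, pi w = swap y z w.
  move=> w; rewrite /swap; case/or3P: (hall w) => /eqP ->.
  - by rewrite pix eq_sym (negbTE yx) eq_sym (negbTE zx).
  - by rewrite h eqxx.
  - by rewrite hpz eqxx eq_sym (negbTE yz).
have nab : forall bb, ~~ ab y z (c (inr bb : edge G)).
  move=> bb; have -> : c (inr bb : edge G) = x by case: bb; rewrite // -(Hcut_eq pc).
  by rewrite /ab !inE negb_or !(eq_sym x) yx zx.
have cl : closedb c y z [set e : edge G | isll e].
  apply/closedP => -[u|u] e f he hf ae af; rewrite !inE.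
    move: e f he hf ae af => [[s|s]|bb] [[s'|s']|bb'] //; rewrite ?hinc_rl //;
      by move=> _ _; rewrite ?(negbTE (nab _)).
  move: e f he hf ae af => [[s|s]|bb] [[s'|s']|bb'] //; by rewrite ?hinc_lr.
have -> : c' = gswitch c y z [set e : edge G | isll e].
  apply/ffunP => -[[s|s]|[]]; rewrite !ffunE !inE /= ?E1' ?hp ?E2' ?ct ?cf //.
apply: gstep_kempe; apply/gstepP; exists y, z, [set e : edge G | isll e]; split => //.
Qed.

Lemma Hsurj p1 p2 : Defs.proper p1 -> Defs.proper p2 ->
  exists c, [/\ Defs.proper c, kempe_equiv (hr1 c) p1 & kempe_equiv (hr2 c) p2].
Proof.
move=> pp1 pp2.
pose pi := tperm (p2 e2) (p1 e1).
have hpi : pi (p2 e2) = p1 e1 by rewrite tpermL.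
pose c : coloring G := [ffun x : edge G => match x with
   | inl (inl s) => p1 (val s) | inl (inr s) => pi (p2 (val s)) | inr _ => p1 e1 end].
have cc1 : forall x u, inc x (inl u : vert G) -> c x = p1 (rho1 x).
  by move=> x u; case: x => [[s|s]|bb]; rewrite ?hinc_rl // !ffunE.
have cc2 : forall x u, inc x (inr u : vert G) -> c x = pi (p2 (rho2 x)).
  by move=> x u; case: x => [[s|s]|bb]; rewrite ?hinc_lr // !ffunE.
have E1 : hr1 c = p1.
  apply/ffunP => e; rewrite !ffunE; case: (eqVneq e e1) => [->|ne].
    by rewrite hsig1_e1 ?ffunE.
  by rewrite hsig1_out ?ffunE.
have E2 : hr2 c = cmap pi p2.
  apply/ffunP => e; rewrite !ffunE; case: (eqVneq e e2) => [->|ne].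
    by rewrite hsig2_e2 ?ffunE /= hpi.
  by rewrite hsig2_out ?ffunE.
exists c; split.
- apply/propP => x y /adjP[xy [[u|u] [hx hy]]].
    rewrite (cc1 _ _ hx) (cc1 _ _ hy); move/propP: pp1; apply; apply/adjP; split.
      by apply: contra xy => /eqP h; apply/eqP; apply: rho1_inj hx hy h.
    by exists u; split; apply: rho1_inc.
  rewrite (cc2 _ _ hx) (cc2 _ _ hy) (inj_eq perm_inj); move/propP: pp2; apply; apply/adjP; split.
    by apply: contra xy => /eqP h; apply/eqP; apply: rho2_inj hx hy h.
  by exists u; split; apply: rho2_inc.
- by rewrite E1 kempe_refl.
- by rewrite E2 kempe_sym kempe_perm.
Qed.

Theorem Htheorem : Kprime G = Kprime G1 * Kprime G2.
Proof.
apply: (@glue _ _ _ hr1 hr2).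
- by move=> c pc; split; [apply: Hprop1 | apply: Hprop2].
- exact: Hfwd1.
- exact: Hfwd2.
- exact: Hlift1.
- exact: Hlift2.
- exact: Hfix.
- exact: Hsurj.
Qed.

End Hcore.


Unset Implicit Arguments.

Theorem theorem12 (G1 G2 : mgraph) (a b : nat) :
  cubic G1 -> cubic G2 -> Kprime G1 = a -> Kprime G2 = b ->
  (forall (d1 : ydata G1) (d2 : ydata G2), Kprime (Ycomp d1 d2) = a * b) /\
  (forall (e1 : edge G1) (flip1 : bool) (e2 : edge G2) (flip2 : bool),
      Kprime (Hcomp e1 flip1 e2 flip2) = a * b).
Proof.
move=> c1 c2 <- <-; split.
  by move=> d1 d2; apply: Ytheorem.
by move=> e1 f1 e2 f2; apply: Htheorem.
Qed.
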